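(* Let $w:\mathbb{Z}\to\mathbb{R}$ be a weight with $w(n)\geq 1$ for all $n$ and $\sup_{n\in\mathbb{Z}}\big(|\tfrac{w(n+1)}{w(n)}|+|\tfrac{w(n)}{w(n+1)}|\big)<\infty$, and fix $1\leq p\leq\infty$. Fix $\underline r=(r_-,r_+)\in\mathbb{N}_0^2$ and summation constants $c_{j,\pm}\in\mathbb{C}$. Suppose $(\alpha(t),\beta(t))$, $(\alpha_\ell(t),\beta_\ell(t))$ and $(\alpha_r(t),\beta_r(t))$ are arbitrary bounded solutions of the equation $\mathrm{AL}_{\underline r}(\alpha,\beta)=0$ of the Ablowitz--Ladik hierarchy, defined for $t\in(t_0-T,t_0+T)$, and set \[ \tilde\alpha(n,t)=\begin{cases}\alpha_r(n,t),& n\geq0,\\ \alpha_\ell(n,t),& n<0,\end{cases}\qquad \tilde\beta(n,t)=\begin{cases}\beta_r(n,t),& n\geq0,\\ \beta_\ell(n,t),& n<0.\end{cases} \] If $\|(\alpha(t)-\tilde\alpha(t),\beta(t)-\tilde\beta(t))\|_{w,p}<\infty$ holds for $t=t_0$, then it holds for all $t\in(t_0-T,t_0+T)$.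
   Context: Sequences are complex valued on $\mathbb{Z}$, $f^\pm(n)=f(n\pm1)$. Solutions are bounded on $\mathbb{Z}\times(t_0-T,t_0+T)$ and $C^1$ in $t$; $T>0$ is the length of the local existence interval. Ablowitz--Ladik hierarchy: define homogeneous coefficients recursively by $\hat f_{0,+}=-\alpha^+$, $\hat g_{0,+}=\tfrac12$, $\hat h_{0,+}=\beta$, $\hat f_{0,-}=\alpha$, $\hat g_{0,-}=\tfrac12$, $\hat h_{0,-}=-\beta^+$, and for $\ell\geq0$ \[ \hat g_{\ell+1,\pm}=\sum_{k=0}^{\ell}\hat f_{\ell-k,\pm}\hat h_{k,\pm}-\sum_{k=1}^{\ell}\hat g_{\ell+1-k,\pm}\hat g_{k,\pm}, \] \[ \hat f_{\ell+1,+}^-=\hat f_{\ell,+}-\alpha(\hat g_{\ell+1,+}+\hat g_{\ell+1,+}^-),\quad \hat h_{\ell+1,+}=\hat h_{\ell,+}^-+\beta(\hat g_{\ell+1,+}+\hat g_{\ell+1,+}^-), \] \[ \hat f_{\ell+1,-}=\hat f_{\ell,-}^-+\alpha(\hat g_{\ell+1,-}+\hat g_{\ell+1,-}^-),\quad \hat h_{\ell+1,-}^-=\hat h_{\ell,-}-\beta(\hat g_{\ell+1,-}+\hat g_{\ell+1,-}^-). \] Given constants $c_{j,\pm}\in\mathbb{C}$, set $f_{\ell,\pm}=\sum_{k=0}^{\ell}c_{\ell-k,\pm}\hat f_{k,\pm}$, and similarly $g_{\ell,\pm}$, $h_{\ell,\pm}$. (These satisfy $g_{0,+}=\tfrac12c_{0,+}$,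 $f_{0,+}=-c_{0,+}\alpha^+$, $h_{0,+}=c_{0,+}\beta$, $g_{\ell+1,+}-g_{\ell+1,+}^-=\alpha h_{\ell,+}^-+\beta f_{\ell,+}$, etc.) The equation $\mathrm{AL}_{\underline r}(\alpha,\beta)=0$ is \[ -i\alpha_t-\alpha(g_{r_+,+}+g_{r_-,-}^-)+f_{r_+-1,+}-f_{r_--1,-}^-=0,\qquad -i\beta_t+\beta(g_{r_+,+}^-+g_{r_-,-})-h_{r_--1,-}+h_{r_+-1,+}^-=0, \] where $f_{-1,\pm}=h_{-1,\pm}=0$. For example $\underline r=(1,1)$, $c_{0,\pm}=1$, $c_{1,\pm}=-2$ gives $-i\alpha_t-(1-\alpha\beta)(\alpha^-+\alpha^+)+2\alpha=0$, $-i\beta_t+(1-\alpha\beta)(\beta^-+\beta^+)-2\beta=0$. Norm: $\|(\alpha,\beta)\|_{w,p}=\big(\sum_n w(n)(|\alpha(n)|^p+|\beta(n)|^p)\big)^{1/p}$ for $1\leq p<\infty$, and $\|(\alpha,\beta)\|_{w,\infty}=\sup_n w(n)(|\alpha(n)|+|\beta(n)|)$. *)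

(* Defs.v *)
From Stdlib Require Import Reals ZArith List.
From Coquelicot Require Import Coquelicot.
Import ListNotations.
Open Scope R_scope.

Definition cseq := Z -> C.

Definition shp (f : cseq) : cseq := fun n => f (n + 1)%Z.
Definition shm (f : cseq) : cseq := fun n => f (n - 1)%Z.

Fixpoint csum (N : nat) (F : nat -> C) : C :=
  match N with
  | O => RtoC 0
  | S N' => Cplus (csum N' F) (F N')
  end.

(* the sign +/- labelling the two halves of the hierarchy *)
Inductive pm := Pl | Mi.

(* triples (f_hat, g_hat, h_hat) *)
Definition trip := (cseq * cseq * cseq)%type.
Definition tf (x : trip) : cseq := fst (fst x).
Definition tg (x : trip) : cseq := snd (fst x).
Definition th (x : trip) : cseq := snd x.

Definition zero_seq : cseq := fun _ => RtoC 0.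
Definition zero_trip : trip := (zero_seq, zero_seq, zero_seq).

Definition hat0 (s : pm) (a b : cseq) : trip :=
  match s with
  | Pl => (fun n => Copp (a (n + 1)%Z), fun _ => RtoC (1/2), b)
  | Mi => (a, fun _ => RtoC (1/2), fun n => Copp (b (n + 1)%Z))
  end.

(* Given the list [x_0; ...; x_l] of homogeneous coefficients, compute
   x_{l+1} according to the recursion of the paper. *)
Definition hat_next (s : pm) (a b : cseq) (l : nat) (xs : list trip) : trip :=
  let X k := nth k xs zero_trip in
  let g1 : cseq := fun n =>
      Cminus (csum (S l) (fun k => Cmult (tf (X (l - k)%nat) n) (th (X k) n)))
             (csum l (fun k => Cmult (tg (X (l - k)%nat) n) (tg (X (S k)) n))) in
  match s with
  | Pl =>
    (* f_{l+1,+}^- = f_{l,+} - a (g + g^-) ; h_{l+1,+} = h_{l,+}^- + b (g + g^-) *)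
    (fun n => Cminus (tf (X l) (n + 1)%Z)
                     (Cmult (a (n + 1)%Z) (Cplus (g1 (n + 1)%Z) (g1 n))),
     g1,
     fun n => Cplus (th (X l) (n - 1)%Z)
                    (Cmult (b n) (Cplus (g1 n) (g1 (n - 1)%Z))))
  | Mi =>
    (* f_{l+1,-} = f_{l,-}^- + a (g + g^-) ; h_{l+1,-}^- = h_{l,-} - b (g + g^-) *)
    (fun n => Cplus (tf (X l) (n - 1)%Z)
                    (Cmult (a n) (Cplus (g1 n) (g1 (n - 1)%Z))),
     g1,
     fun n => Cminus (th (X l) (n + 1)%Z)
                     (Cmult (b (n + 1)%Z) (Cplus (g1 (n + 1)%Z) (g1 n))))
  end.

Fixpoint hats (s : pm) (a b : cseq) (l : nat) : list trip :=
  match l with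
  | O => [hat0 s a b]
  | S l' => let xs := hats s a b l' in xs ++ [hat_next s a b l' xs]
  end.

Definition hat (s : pm) (a b : cseq) (l : nat) : trip :=
  nth l (hats s a b l) zero_trip.

Definition coefF (s : pm) (c : nat -> C) (a b : cseq) (l : nat) : cseq :=
  fun n => csum (S l) (fun k => Cmult (c (l - k)%nat) (tf (hat s a b k) n)).
Definition coefG (s : pm) (c : nat -> C) (a b : cseq) (l : nat) : cseq :=
  fun n => csum (S l) (fun k => Cmult (c (l - k)%nat) (tg (hat s a b k) n)).
Definition coefH (s : pm) (c : nat -> C) (a b : cseq) (l : nat) : cseq :=
  fun n => csum (S l) (fun k => Cmult (c (l - k)%nat) (th (hat s a b k) n)).

(* f_{l-1}, h_{l-1} with the convention f_{-1} = h_{-1} = 0 *)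
Definition coefF_pred (s : pm) (c : nat -> C) (a b : cseq) (l : nat) : cseq :=
  match l with O => zero_seq | S l' => coefF s c a b l' end.
Definition coefH_pred (s : pm) (c : nat -> C) (a b : cseq) (l : nat) : cseq :=
  match l with O => zero_seq | S l' => coefH s c a b l' end.

(* The left-hand sides of AL_r(alpha,beta) = 0, given the time derivatives
   (da, db) of (a, b) at the time considered. *)
Definition AL_alpha (rm rp : nat) (cp cm : nat -> C) (a b da : cseq) : cseq :=
  fun n =>
    Cminus (Cplus (Cminus (Copp (Cmult Ci (da n)))
                          (Cmult (a n) (Cplus (coefG Pl cp a b rp n)
                                              (coefG Mi cm a b rm (n - 1)%Z))))
                  (coefF_pred Pl cp a b rp n))
           (coefF_pred Mi cm a b rm (n - 1)%Z).

Definition AL_beta (rm rp : nat) (cp cm : nat -> C) (a b db : cseq) : cseq :=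
  fun n =>
    Cplus (Cminus (Cplus (Copp (Cmult Ci (db n)))
                         (Cmult (b n) (Cplus (coefG Pl cp a b rp (n - 1)%Z)
                                             (coefG Mi cm a b rm n))))
                  (coefH_pred Mi cm a b rm n))
          (coefH_pred Pl cp a b rp (n - 1)%Z).

Definition AL_solution (rm rp : nat) (cp cm : nat -> C) (t0 T : R)
    (alpha beta : Z -> R -> C) : Prop :=
  (exists M : R, forall n t, t0 - T < t < t0 + T ->
        Cmod (alpha n t) <= M /\ Cmod (beta n t) <= M) /\
  exists dalpha dbeta : Z -> R -> C,
    (forall n t, t0 - T < t < t0 + T ->
        is_derive (fun s => alpha n s) t (dalpha n t) /\
        is_derive (fun s => beta n s) t (dbeta n t) /\
        continuous (fun s => dalpha n s) t /\
        continuous (fun s => dbeta n s) t) /\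
    (forall t, t0 - T < t < t0 + T -> forall n,
        AL_alpha rm rp cp cm (fun m => alpha m t) (fun m => beta m t)
                 (fun m => dalpha m t) n = RtoC 0 /\
        AL_beta rm rp cp cm (fun m => alpha m t) (fun m => beta m t)
                (fun m => dbeta m t) n = RtoC 0).

Inductive exponent := PFin (p : R) | PInf.
Definition valid_exponent (p : exponent) : Prop :=
  match p with PFin q => 1 <= q | PInf => True end.

Definition abspow (x q : R) : R :=
  if Req_EM_T x 0 then 0 else Rpower (Rabs x) q.

Definition wnorm_finite (w : Z -> R) (p : exponent) (a b : cseq) : Prop :=
  match p with
  | PFin q => exists B : R, forall N : nat,
      sum_f_R0 (fun k => let n := (Z.of_nat k - Z.of_nat N)%Z in
                 w n * (abspow (Cmod (a n)) q + abspow (Cmod (b n)) q))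
               (2 * N) <= B
  | PInf => exists B : R, forall n, w n * (Cmod (a n) + Cmod (b n)) <= B
  end.

(* Main.v *)
Require Import Defs.
From Stdlib Require Import Reals ZArith Lra Lia List.
From Coquelicot Require Import Coquelicot.
Open Scope R_scope.

Lemma cderive_fst (f : R -> C) x l :
  is_derive f x l -> is_derive (fun s => fst (f s)) x (fst l).
Proof.
  intros H. unfold is_derive in *.
  apply (filterdiff_comp' f (fun c : C => fst c) x _ (fun c : C => fst c) H).
  apply filterdiff_linear. apply is_linear_fst.
Qed.

Lemma cderive_snd (f : R -> C) x l :
  is_derive f x l -> is_derive (fun s => snd (f s)) x (snd l).
Proof.
  intros H. unfold is_derive in *.
  apply (filterdiff_comp' f (fun c : C => snd c) x _ (fun c : C => snd c) H).
  apply filterdiff_linear. apply is_linear_snd.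
Qed.

Lemma rmvt (f df : R -> R) a b Q :
  (forall x, Rmin a b <= x <= Rmax a b -> is_derive f x (df x) /\ Rabs (df x) <= Q) ->
  Rabs (f b - f a) <= Q * Rabs (b - a).
Proof.
  intros H.
  destruct (MVT_gen f a b df) as [c [Hc E]].
  - intros x Hx. apply H. lra.
  - intros x Hx. apply continuity_pt_filterlim.
    apply (ex_derive_continuous f). exists (df x). apply H. lra.
  - rewrite E, Rabs_mult. apply Rmult_le_compat_r. apply Rabs_pos. apply H; lra.
Qed.

Lemma Cmod_le_sum (z : C) : Cmod z <= 2 * Rmax (Rabs (fst z)) (Rabs (snd z)).
Proof.
  eapply Rle_trans. apply Cmod_2Rmax.
  assert (sqrt 2 <= 2).
  { assert (H0 : sqrt 2 <= sqrt (2*2)) by (apply sqrt_le_1_alt; lra).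
    rewrite sqrt_square in H0 by lra. exact H0. }
  pose proof (Rabs_pos (fst z)). pose proof (Rabs_pos (snd z)).
  unfold Rmax in *; destruct Rle_dec; nra.
Qed.

Lemma cmvt (f df : R -> C) a b Q :
  (forall x, Rmin a b <= x <= Rmax a b -> is_derive f x (df x) /\ Cmod (df x) <= Q) ->
  Cmod (Cminus (f b) (f a)) <= 2 * Q * Rabs (b - a).
Proof.
  intros H.
  assert (H1 := rmvt (fun s => fst (f s)) (fun s => fst (df s)) a b Q).
  assert (H2 := rmvt (fun s => snd (f s)) (fun s => snd (df s)) a b Q).
  simpl in *.
  eapply Rle_trans. apply Cmod_le_sum. simpl.
  assert (A1 : Rabs (fst (f b) - fst (f a)) <= Q * Rabs (b - a)).
  { apply H1. intros x Hx. destruct (H x Hx) as [D M]. split. now apply cderive_fst.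
    eapply Rle_trans. 2: exact M. apply (Rle_trans _ _ _ (Rmax_l _ _ ) (Rmax_Cmod _)). }
  assert (A2 : Rabs (snd (f b) - snd (f a)) <= Q * Rabs (b - a)).
  { apply H2. intros x Hx. destruct (H x Hx) as [D M]. split. now apply cderive_snd.
    eapply Rle_trans. 2: exact M. apply (Rle_trans _ _ _ (Rmax_r _ _ ) (Rmax_Cmod _)). }
  unfold Cminus, Cplus, Copp. simpl. unfold Rminus in *.
  rewrite Rmult_assoc. apply Rmult_le_compat_l. lra. apply Rmax_lub; lra.
Qed.

Fixpoint Zsum (N : nat) (f : Z -> R) : R :=
  match N with
  | O => f 0%Z
  | S N' => Zsum N' f + f (Z.of_nat N) + f (- Z.of_nat N)%Z
  end.

Lemma Zsum_S N f : Zsum (S N) f = Zsum N f + f (Z.of_nat N + 1)%Z + f (- (Z.of_nat N + 1))%Z.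
Proof. cbn [Zsum]. rewrite Nat2Z.inj_succ. reflexivity. Qed.

Lemma Zsum_ext N f g : (forall j, (Z.abs j <= Z.of_nat N)%Z -> f j = g j) -> Zsum N f = Zsum N g.
Proof.
  induction N; simpl; intros H.
  - apply H. simpl. lia.
  - rewrite IHN by (intros j Hj; apply H; lia).
    rewrite (H (Z.pos (Pos.of_succ_nat N))), (H (Z.neg (Pos.of_succ_nat N))) by lia. reflexivity.
Qed.

Lemma Zsum_le N f g : (forall j, (Z.abs j <= Z.of_nat N)%Z -> f j <= g j) -> Zsum N f <= Zsum N g.
Proof.
  induction N; simpl; intros H.
  - apply H. simpl. lia.
  - assert (Zsum N f <= Zsum N g) by (apply IHN; intros j Hj; apply H; lia).
    pose proof (H (Z.pos (Pos.of_succ_nat N))). pose proof (H (Z.neg (Pos.of_succ_nat N))).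
    assert (f (Z.pos (Pos.of_succ_nat N)) <= g (Z.pos (Pos.of_succ_nat N))) by (apply H; lia).
    assert (f (Z.neg (Pos.of_succ_nat N)) <= g (Z.neg (Pos.of_succ_nat N))) by (apply H; lia).
    lra.
Qed.

Lemma Zsum_nonneg N f : (forall j, 0 <= f j) -> 0 <= Zsum N f.
Proof.
  intros H. induction N; simpl. apply H.
  pose proof (H (Z.pos (Pos.of_succ_nat N))). pose proof (H (Z.neg (Pos.of_succ_nat N))). lra.
Qed.

Lemma Zsum_plus N f g : Zsum N (fun j => f j + g j) = Zsum N f + Zsum N g.
Proof. induction N; simpl; try rewrite IHN; ring. Qed.

Lemma Zsum_scal N c f : Zsum N (fun j => c * f j) = c * Zsum N f.
Proof. induction N; simpl; try rewrite IHN; ring. Qed.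

Lemma Zsum_const0 N : Zsum N (fun _ => 0) = 0.
Proof. induction N; simpl; try rewrite IHN; ring. Qed.

Lemma Zsum_swap N K (g : Z -> Z -> R) :
  Zsum N (fun n => Zsum K (fun j => g n j)) = Zsum K (fun j => Zsum N (fun n => g n j)).
Proof.
  induction N; simpl. reflexivity.
  rewrite IHN. rewrite <- !Zsum_plus. reflexivity.
Qed.

Lemma Zsum_monoN N N' f : (forall j, 0 <= f j) -> (N <= N')%nat -> Zsum N f <= Zsum N' f.
Proof.
  intros H L. induction L. lra. simpl.
  pose proof (H (Z.pos (Pos.of_succ_nat m))). pose proof (H (Z.neg (Pos.of_succ_nat m))). lra.
Qed.

Lemma Zsum_term N f j : (forall j, 0 <= f j) -> (Z.abs j <= Z.of_nat N)%Z -> f j <= Zsum N f.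
Proof.
  intros H. induction N; simpl; intros Hj.
  - replace j with 0%Z by lia. lra.
  - destruct (Z.eq_dec (Z.abs j) (Z.of_nat (S N))) as [E|E].
    + pose proof (Zsum_nonneg N f H).
      pose proof (H (Z.pos (Pos.of_succ_nat N))). pose proof (H (Z.neg (Pos.of_succ_nat N))).
      destruct (Z.abs_spec j) as [[? Ej]|[? Ej]]; rewrite Ej in E.
      * replace j with (Z.pos (Pos.of_succ_nat N)) by lia. lra.
      * replace j with (Z.neg (Pos.of_succ_nat N)) by lia. lra.
    + pose proof (IHN ltac:(lia)).
      pose proof (H (Z.pos (Pos.of_succ_nat N))). pose proof (H (Z.neg (Pos.of_succ_nat N))). lra.
Qed.

Lemma Zsum_tel_p N f : Zsum N (fun j => f (j + 1)%Z) + f (- Z.of_nat N)%Z = Zsum N f + f (Z.of_nat N + 1)%Z.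
Proof.
  induction N. simpl. ring.
  rewrite !Zsum_S. rewrite Nat2Z.inj_succ. unfold Z.succ.
  replace (- (Z.of_nat N + 1) + 1)%Z with (- Z.of_nat N)%Z by lia.
  replace (- (Z.of_nat N + 1))%Z with (- Z.of_nat N - 1)%Z by lia.
  lra.
Qed.

Lemma Zsum_tel_m N f : Zsum N (fun j => f (j - 1)%Z) + f (Z.of_nat N)%Z = Zsum N f + f (- Z.of_nat N - 1)%Z.
Proof.
  induction N. simpl. ring.
  rewrite !Zsum_S. rewrite Nat2Z.inj_succ. unfold Z.succ.
  replace (Z.of_nat N + 1 - 1)%Z with (Z.of_nat N)%Z by lia.
  replace (- (Z.of_nat N + 1) - 1)%Z with (- Z.of_nat N - 1 - 1)%Z by lia.
  replace (- (Z.of_nat N + 1))%Z with (- Z.of_nat N - 1)%Z by lia.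
  lra.
Qed.

Lemma Zsum_shift_p N f : (forall j, 0 <= f j) -> Zsum N (fun j => f (j + 1)%Z) <= Zsum (S N) f.
Proof.
  intros H. pose proof (Zsum_tel_p N f). rewrite Zsum_S.
  pose proof (H (- Z.of_nat N)%Z). pose proof (H (- (Z.of_nat N + 1))%Z). lra.
Qed.

Lemma Zsum_shift_m N f : (forall j, 0 <= f j) -> Zsum N (fun j => f (j - 1)%Z) <= Zsum (S N) f.
Proof.
  intros H. pose proof (Zsum_tel_m N f). rewrite Zsum_S.
  replace (- (Z.of_nat N + 1))%Z with (- Z.of_nat N - 1)%Z by lia.
  pose proof (H (Z.of_nat N)%Z). pose proof (H (Z.of_nat N + 1)%Z). lra.
Qed.

Ltac Ceq := repeat match goal with x : C |- _ => destruct x end;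
  unfold Cminus, Cplus, Copp, Cmult, RtoC; simpl; f_equal; ring.

Definition bnd M (a : cseq) := forall n, Cmod (a n) <= M.
Definition dd (a b a' b' : cseq) (m : Z) : R :=
  Cmod (Cminus (a m) (a' m)) + Cmod (Cminus (b m) (b' m)).
Definition Wn K a b a' b' n := Zsum K (fun j => dd a b a' b' (n + j)%Z).

Definition Loc (F : cseq -> cseq -> cseq) : Prop :=
  exists K : nat, forall M, exists L, forall a b a' b',
    bnd M a -> bnd M b -> bnd M a' -> bnd M b' ->
    forall n, Cmod (F a b n) <= L /\ Cmod (Cminus (F a b n) (F a' b' n)) <= L * Wn K a b a' b' n.

Lemma dd_nonneg a b a' b' m : 0 <= dd a b a' b' m.
Proof. unfold dd. pose proof (Cmod_ge_0 (Cminus (a m) (a' m))). pose proof (Cmod_ge_0 (Cminus (b m) (b' m))). lra. Qed.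

Lemma Wn_nonneg K a b a' b' n : 0 <= Wn K a b a' b' n.
Proof. apply Zsum_nonneg. intros; apply dd_nonneg. Qed.

Lemma Wn_mono K K' a b a' b' n : (K <= K')%nat -> Wn K a b a' b' n <= Wn K' a b a' b' n.
Proof. intros; apply Zsum_monoN; auto. intros; apply dd_nonneg. Qed.

Lemma Wn_sp K a b a' b' n : Wn K a b a' b' (n + 1)%Z <= Wn (S K) a b a' b' n.
Proof.
  unfold Wn. rewrite (Zsum_ext K _ (fun j => dd a b a' b' (n + (j + 1))%Z)).
  apply (Zsum_shift_p K (fun j => dd a b a' b' (n + j)%Z)). intros; apply dd_nonneg.
  intros; f_equal; lia.
Qed.

Lemma Wn_sm K a b a' b' n : Wn K a b a' b' (n - 1)%Z <= Wn (S K) a b a' b' n.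
Proof.
  unfold Wn. rewrite (Zsum_ext K _ (fun j => dd a b a' b' (n + (j - 1))%Z)).
  apply (Zsum_shift_m K (fun j => dd a b a' b' (n + j)%Z)). intros; apply dd_nonneg.
  intros; f_equal; lia.
Qed.

Lemma Wn_term K a b a' b' n : dd a b a' b' n <= Wn K a b a' b' n.
Proof.
  unfold Wn. rewrite <- (Z.add_0_r n) at 1.
  apply (Zsum_term K (fun j => dd a b a' b' (n + j)%Z)). intros; apply dd_nonneg. lia.
Qed.

Lemma Loc_ext F G : Loc F -> (forall a b n, F a b n = G a b n) -> Loc G.
Proof.
  intros [K HK] E. exists K. intros M. destruct (HK M) as [L HL]. exists L.
  intros. rewrite <- !E. auto.
Qed.

Lemma Loc_const c : Loc (fun _ _ _ => c).
Proof.
  exists O. intros M. exists (Cmod c). intros. split. lra.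
  replace (Cminus c c) with (RtoC 0) by Ceq. rewrite Cmod_0.
  apply Rmult_le_pos. apply Cmod_ge_0. apply Wn_nonneg.
Qed.

Lemma Loc_a : Loc (fun a b => a).
Proof.
  exists O. intros M. exists (Rmax M 1). intros a b a' b' Ha Hb Ha' Hb' n. split.
  - eapply Rle_trans. apply Ha. apply Rmax_l.
  - eapply Rle_trans. 2: apply Rmult_le_compat_r. 3: apply Rmax_r. 2: apply Wn_nonneg.
    rewrite Rmult_1_l. eapply Rle_trans. 2: apply Wn_term. unfold dd.
    pose proof (Cmod_ge_0 (Cminus (b n) (b' n))). lra.
Qed.

Lemma Loc_b : Loc (fun a b => b).
Proof.
  exists O. intros M. exists (Rmax M 1). intros a b a' b' Ha Hb Ha' Hb' n. split.
  - eapply Rle_trans. apply Hb. apply Rmax_l.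
  - eapply Rle_trans. 2: apply Rmult_le_compat_r. 3: apply Rmax_r. 2: apply Wn_nonneg.
    rewrite Rmult_1_l. eapply Rle_trans. 2: apply Wn_term. unfold dd.
    pose proof (Cmod_ge_0 (Cminus (a n) (a' n))). lra.
Qed.

Lemma Loc_L_nonneg (F : cseq -> cseq -> cseq) M L K :
  (forall a b a' b', bnd M a -> bnd M b -> bnd M a' -> bnd M b' ->
    forall n, Cmod (F a b n) <= L /\ Cmod (Cminus (F a b n) (F a' b' n)) <= L * Wn K a b a' b' n) ->
  0 <= M -> 0 <= L.
Proof.
  intros H HM. assert (B0 : bnd M zero_seq).
  { intros n. unfold zero_seq. rewrite Cmod_0. auto. }
  destruct (H _ _ _ _ B0 B0 B0 B0 0%Z) as [H1 _]. pose proof (Cmod_ge_0 (F zero_seq zero_seq 0%Z)). lra.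
Qed.

Lemma Loc_sp F : Loc F -> Loc (fun a b n => F a b (n + 1)%Z).
Proof.
  intros [K HK]. exists (S K). intros M. destruct (HK M) as [L HL]. exists (Rmax L 0).
  intros a b a' b' Ha Hb Ha' Hb' n. destruct (HL a b a' b' Ha Hb Ha' Hb' (n+1)%Z) as [H1 H2].
  pose proof (Wn_sp K a b a' b' n). pose proof (Wn_nonneg K a b a' b' (n+1)%Z).
  split. eapply Rle_trans. apply H1. apply Rmax_l.
  eapply Rle_trans. apply H2. apply Rmult_le_compat. 
  - pose proof (Cmod_ge_0 (F a b (n + 1)%Z)). lra.
  - auto.
  - apply Rmax_l.
  - auto.
Qed.

Lemma Loc_sm F : Loc F -> Loc (fun a b n => F a b (n - 1)%Z).
Proof.
  intros [K HK]. exists (S K). intros M. destruct (HK M) as [L HL]. exists (Rmax L 0).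
  intros a b a' b' Ha Hb Ha' Hb' n. destruct (HL a b a' b' Ha Hb Ha' Hb' (n-1)%Z) as [H1 H2].
  pose proof (Wn_sm K a b a' b' n). pose proof (Wn_nonneg K a b a' b' (n-1)%Z).
  split. eapply Rle_trans. apply H1. apply Rmax_l.
  eapply Rle_trans. apply H2. apply Rmult_le_compat. 
  - pose proof (Cmod_ge_0 (F a b (n - 1)%Z)). lra.
  - auto.
  - apply Rmax_l.
  - auto.
Qed.

Lemma Loc_plus F G : Loc F -> Loc G -> Loc (fun a b n => Cplus (F a b n) (G a b n)).
Proof.
  intros [K1 H1] [K2 H2]. exists (max K1 K2). intros M.
  destruct (H1 M) as [L1 HL1]. destruct (H2 M) as [L2 HL2]. exists (L1 + L2).
  intros a b a' b' Ha Hb Ha' Hb' n.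
  destruct (HL1 a b a' b' Ha Hb Ha' Hb' n) as [A1 B1].
  destruct (HL2 a b a' b' Ha Hb Ha' Hb' n) as [A2 B2].
  pose proof (Wn_mono K1 (max K1 K2) a b a' b' n ltac:(lia)).
  pose proof (Wn_mono K2 (max K1 K2) a b a' b' n ltac:(lia)).
  pose proof (Cmod_ge_0 (F a b n)). pose proof (Cmod_ge_0 (G a b n)).
  split. eapply Rle_trans. apply Cmod_triangle. lra.
  replace (Cminus (Cplus (F a b n) (G a b n)) (Cplus (F a' b' n) (G a' b' n)))
    with (Cplus (Cminus (F a b n) (F a' b' n)) (Cminus (G a b n) (G a' b' n))) by Ceq.
  eapply Rle_trans. apply Cmod_triangle. 
  assert (L1 * Wn K1 a b a' b' n <= L1 * Wn (max K1 K2) a b a' b' n) by (apply Rmult_le_compat_l; lra).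
  assert (L2 * Wn K2 a b a' b' n <= L2 * Wn (max K1 K2) a b a' b' n) by (apply Rmult_le_compat_l; lra).
  lra.
Qed.

Lemma Loc_opp F : Loc F -> Loc (fun a b n => Copp (F a b n)).
Proof.
  intros [K H]. exists K. intros M. destruct (H M) as [L HL]. exists L. intros.
  destruct (HL a b a' b' H0 H1 H2 H3 n) as [A1 B1]. split.
  replace (Copp (F a b n)) with (Cmult (RtoC (-1)) (F a b n)) by Ceq.
  rewrite Cmod_mult, Cmod_R. replace (Rabs (-1)) with 1 by (rewrite Rabs_left; lra). lra.
  replace (Cminus (Copp (F a b n)) (Copp (F a' b' n))) with (Cmult (RtoC (-1)) (Cminus (F a b n) (F a' b' n))) by Ceq.
  rewrite Cmod_mult, Cmod_R. replace (Rabs (-1)) with 1 by (rewrite Rabs_left; lra). lra.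
Qed.

Lemma Loc_minus F G : Loc F -> Loc G -> Loc (fun a b n => Cminus (F a b n) (G a b n)).
Proof. intros. apply Loc_plus; auto. apply Loc_opp; auto. Qed.

Lemma Loc_mult F G : Loc F -> Loc G -> Loc (fun a b n => Cmult (F a b n) (G a b n)).
Proof.
  intros [K1 H1] [K2 H2]. exists (max K1 K2). intros M.
  destruct (Rle_dec 0 M) as [HM|HM]; cycle 1.
  { exists 0. intros a b a' b' Ha. pose proof (Ha 0%Z). pose proof (Cmod_ge_0 (a 0%Z)). lra. }
  destruct (H1 M) as [L1 HL1]. destruct (H2 M) as [L2 HL2]. exists (2 * L1 * L2).
  pose proof (Loc_L_nonneg _ _ _ _ HL1 HM). pose proof (Loc_L_nonneg _ _ _ _ HL2 HM).
  intros a b a' b' Ha Hb Ha' Hb' n.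
  destruct (HL1 a b a' b' Ha Hb Ha' Hb' n) as [A1 B1].
  destruct (HL2 a b a' b' Ha Hb Ha' Hb' n) as [A2 B2].
  destruct (HL2 a' b' a' b' Ha' Hb' Ha' Hb' n) as [A2' _].
  pose proof (Wn_mono K1 (max K1 K2) a b a' b' n ltac:(lia)).
  pose proof (Wn_mono K2 (max K1 K2) a b a' b' n ltac:(lia)).
  pose proof (Wn_nonneg K1 a b a' b' n). pose proof (Wn_nonneg K2 a b a' b' n).
  pose proof (Cmod_ge_0 (F a b n)). pose proof (Cmod_ge_0 (G a b n)). pose proof (Cmod_ge_0 (G a' b' n)).
  pose proof (Cmod_ge_0 (Cminus (F a b n) (F a' b' n))). pose proof (Cmod_ge_0 (Cminus (G a b n) (G a' b' n))).
  split. rewrite Cmod_mult. nra.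
  replace (Cminus (Cmult (F a b n) (G a b n)) (Cmult (F a' b' n) (G a' b' n)))
    with (Cplus (Cmult (F a b n) (Cminus (G a b n) (G a' b' n))) (Cmult (G a' b' n) (Cminus (F a b n) (F a' b' n)))) by Ceq.
  eapply Rle_trans. apply Cmod_triangle. rewrite !Cmod_mult.
  assert (E1 : Cmod (F a b n) * Cmod (Cminus (G a b n) (G a' b' n)) <= L1 * (L2 * Wn (max K1 K2) a b a' b' n)).
  { apply Rmult_le_compat; try lra. eapply Rle_trans; [apply B2|apply Rmult_le_compat_l; lra]. }
  assert (E2 : Cmod (G a' b' n) * Cmod (Cminus (F a b n) (F a' b' n)) <= L2 * (L1 * Wn (max K1 K2) a b a' b' n)).
  { apply Rmult_le_compat; try lra. eapply Rle_trans; [apply B1|apply Rmult_le_compat_l; lra]. }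
  nra.
Qed.

Lemma Loc_csum N (F : nat -> cseq -> cseq -> cseq) :
  (forall k, (k < N)%nat -> Loc (F k)) -> Loc (fun a b n => csum N (fun k => F k a b n)).
Proof.
  induction N; intros H; simpl.
  - apply Loc_const.
  - apply (Loc_plus (fun a b n => csum N (fun k => F k a b n)) (F N)).
    apply IHN; intros; apply H; lia. apply H; lia.
Qed.

Lemma csum_ext N F G : (forall k, (k < N)%nat -> F k = G k) -> csum N F = csum N G.
Proof.
  induction N; simpl; intros H. reflexivity.
  rewrite IHN by (intros; apply H; lia). rewrite H by lia. reflexivity.
Qed.

Lemma hats_length s a b l : length (hats s a b l) = S l.
Proof. induction l; simpl; auto. rewrite length_app, IHl. simpl. lia. Qed.

Lemma hats_nth s a b l k : (k <= l)%nat -> nth k (hats s a b l) zero_trip = hat s a b k.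
Proof.
  unfold hat. induction l; intros Hk.
  - replace k with O by lia. reflexivity.
  - destruct (Nat.eq_dec k (S l)) as [->|Ne]. reflexivity.
    simpl. rewrite app_nth1 by (rewrite hats_length; lia). apply IHl. lia.
Qed.

Lemma hat_S s a b l : hat s a b (S l) = hat_next s a b l (hats s a b l).
Proof.
  unfold hat at 1. simpl. rewrite app_nth2 by (rewrite hats_length; lia).
  rewrite hats_length. rewrite Nat.sub_diag. reflexivity.
Qed.

Lemma hat_0 s a b : hat s a b 0 = hat0 s a b.
Proof. reflexivity. Qed.

Definition G1 s l (a b : cseq) (n : Z) : C :=
  Cminus (csum (S l) (fun k => Cmult (tf (hat s a b (l - k)%nat) n) (th (hat s a b k) n)))
         (csum l (fun k => Cmult (tg (hat s a b (l - k)%nat) n) (tg (hat s a b (S k)) n))).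

Lemma G1_eq s a b l n :
  tg (hat_next s a b l (hats s a b l)) n = G1 s l a b n.
Proof.
  assert (E : (fun n => Cminus (csum (S l) (fun k => Cmult (tf (nth (l - k)%nat (hats s a b l) zero_trip) n) (th (nth k (hats s a b l) zero_trip) n)))
             (csum l (fun k => Cmult (tg (nth (l - k)%nat (hats s a b l) zero_trip) n) (tg (nth (S k) (hats s a b l) zero_trip) n)))) n
           = G1 s l a b n).
  { unfold G1. f_equal; apply csum_ext; intros k Hk; rewrite !hats_nth by lia; reflexivity. }
  destruct s; exact E.
Qed.

Lemma hatf_S_Pl a b l n : tf (hat Pl a b (S l)) n =
  Cminus (tf (hat Pl a b l) (n+1)%Z) (Cmult (a (n+1)%Z) (Cplus (G1 Pl l a b (n+1)%Z) (G1 Pl l a b n))).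
Proof. rewrite hat_S, <- !G1_eq, <- (hats_nth Pl a b l l) by lia. reflexivity. Qed.
Lemma hath_S_Pl a b l n : th (hat Pl a b (S l)) n =
  Cplus (th (hat Pl a b l) (n-1)%Z) (Cmult (b n) (Cplus (G1 Pl l a b n) (G1 Pl l a b (n-1)%Z))).
Proof. rewrite hat_S, <- !G1_eq, <- (hats_nth Pl a b l l) by lia. reflexivity. Qed.
Lemma hatf_S_Mi a b l n : tf (hat Mi a b (S l)) n =
  Cplus (tf (hat Mi a b l) (n-1)%Z) (Cmult (a n) (Cplus (G1 Mi l a b n) (G1 Mi l a b (n-1)%Z))).
Proof. rewrite hat_S, <- !G1_eq, <- (hats_nth Mi a b l l) by lia. reflexivity. Qed.
Lemma hath_S_Mi a b l n : th (hat Mi a b (S l)) n =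
  Cminus (th (hat Mi a b l) (n+1)%Z) (Cmult (b (n+1)%Z) (Cplus (G1 Mi l a b (n+1)%Z) (G1 Mi l a b n))).
Proof. rewrite hat_S, <- !G1_eq, <- (hats_nth Mi a b l l) by lia. reflexivity. Qed.

Definition Loc3 (x : cseq -> cseq -> trip) :=
  Loc (fun a b => tf (x a b)) /\ Loc (fun a b => tg (x a b)) /\ Loc (fun a b => th (x a b)).

Lemma hat_Loc s : forall l, forall k, (k <= l)%nat -> Loc3 (fun a b => hat s a b k).
Proof.
  induction l; intros k Hk.
  - replace k with O by lia. unfold Loc3. destruct s; repeat split.
    + eapply Loc_ext. apply Loc_opp. apply (Loc_sp (fun a b => a)). apply Loc_a. reflexivity.
    + eapply Loc_ext. apply (Loc_const (RtoC (1/2))). reflexivity.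
    + eapply Loc_ext. apply Loc_b. reflexivity.
    + eapply Loc_ext. apply Loc_a. reflexivity.
    + eapply Loc_ext. apply (Loc_const (RtoC (1/2))). reflexivity.
    + eapply Loc_ext. apply Loc_opp. apply (Loc_sp (fun a b => b)). apply Loc_b. reflexivity.
  - destruct (Nat.eq_dec k (S l)) as [->|Ne]; [|apply IHl; lia].
    assert (HG : Loc (G1 s l)).
    { unfold G1. apply (Loc_minus (fun a b n => csum (S l) (fun k => Cmult (tf (hat s a b (l - k)%nat) n) (th (hat s a b k) n)))
                          (fun a b n => csum l (fun k => Cmult (tg (hat s a b (l - k)%nat) n) (tg (hat s a b (S k)) n)))).
      - apply (Loc_csum (S l) (fun k a b n => Cmult (tf (hat s a b (l - k)%nat) n) (th (hat s a b k) n))).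
        intros k' Hk'. apply (Loc_mult (fun a b => tf (hat s a b (l - k')%nat)) (fun a b => th (hat s a b k'))).
        apply (IHl (l - k')%nat). lia. apply (IHl k'). lia.
      - apply (Loc_csum l (fun k a b n => Cmult (tg (hat s a b (l - k)%nat) n) (tg (hat s a b (S k)) n))).
        intros k' Hk'. apply (Loc_mult (fun a b => tg (hat s a b (l - k')%nat)) (fun a b => tg (hat s a b (S k')))).
        apply (IHl (l - k')%nat). lia. apply (IHl (S k')). lia. }
    destruct (IHl l (le_n l)) as [Hf [Hg Hh]].
    assert (HGp := Loc_sp _ HG). assert (HGm := Loc_sm _ HG).
    unfold Loc3. repeat split.
    + destruct s.
      * eapply Loc_ext. 2:{ intros a b n. symmetry. apply hatf_S_Pl. }
        apply (Loc_minus (fun a b n => tf (hat Pl a b l) (n+1)%Z)). apply (Loc_sp (fun a b => tf (hat Pl a b l))); auto.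
        apply (Loc_mult (fun a b n => a (n+1)%Z)). apply (Loc_sp (fun a b => a)). apply Loc_a.
        apply (Loc_plus (fun a b n => G1 Pl l a b (n+1)%Z)); auto.
      * eapply Loc_ext. 2:{ intros a b n. symmetry. apply hatf_S_Mi. }
        apply (Loc_plus (fun a b n => tf (hat Mi a b l) (n-1)%Z)). apply (Loc_sm (fun a b => tf (hat Mi a b l))); auto.
        apply (Loc_mult (fun a b => a)). apply Loc_a.
        apply (Loc_plus (G1 Mi l)); auto.
    + eapply Loc_ext. exact HG. intros a b n. rewrite hat_S. rewrite G1_eq. reflexivity.
    + destruct s.
      * eapply Loc_ext. 2:{ intros a b n. symmetry. apply hath_S_Pl. }
        apply (Loc_plus (fun a b n => th (hat Pl a b l) (n-1)%Z)). apply (Loc_sm (fun a b => th (hat Pl a b l))); auto.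
        apply (Loc_mult (fun a b => b)). apply Loc_b.
        apply (Loc_plus (G1 Pl l)); auto.
      * eapply Loc_ext. 2:{ intros a b n. symmetry. apply hath_S_Mi. }
        apply (Loc_minus (fun a b n => th (hat Mi a b l) (n+1)%Z)). apply (Loc_sp (fun a b => th (hat Mi a b l))); auto.
        apply (Loc_mult (fun a b n => b (n+1)%Z)). apply (Loc_sp (fun a b => b)). apply Loc_b.
        apply (Loc_plus (fun a b n => G1 Mi l a b (n+1)%Z)); auto.
Qed.

Lemma Loc_coefF s c l : Loc (fun a b => coefF s c a b l).
Proof.
  unfold coefF. apply (Loc_csum (S l) (fun k a b n => Cmult (c (l - k)%nat) (tf (hat s a b k) n))).
  intros k Hk. apply (Loc_mult (fun _ _ _ => c (l - k)%nat) (fun a b => tf (hat s a b k))).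
  apply Loc_const. apply (hat_Loc s k k). lia.
Qed.
Lemma Loc_coefG s c l : Loc (fun a b => coefG s c a b l).
Proof.
  unfold coefG. apply (Loc_csum (S l) (fun k a b n => Cmult (c (l - k)%nat) (tg (hat s a b k) n))).
  intros k Hk. apply (Loc_mult (fun _ _ _ => c (l - k)%nat) (fun a b => tg (hat s a b k))).
  apply Loc_const. apply (hat_Loc s k k). lia.
Qed.
Lemma Loc_coefH s c l : Loc (fun a b => coefH s c a b l).
Proof.
  unfold coefH. apply (Loc_csum (S l) (fun k a b n => Cmult (c (l - k)%nat) (th (hat s a b k) n))).
  intros k Hk. apply (Loc_mult (fun _ _ _ => c (l - k)%nat) (fun a b => th (hat s a b k))).
  apply Loc_const. apply (hat_Loc s k k). lia.
Qed.
Lemma Loc_coefF_pred s c l : Loc (fun a b => coefF_pred s c a b l).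
Proof. destruct l. eapply Loc_ext. apply (Loc_const (RtoC 0)). reflexivity. apply Loc_coefF. Qed.
Lemma Loc_coefH_pred s c l : Loc (fun a b => coefH_pred s c a b l).
Proof. destruct l. eapply Loc_ext. apply (Loc_const (RtoC 0)). reflexivity. apply Loc_coefH. Qed.

Definition XA rm rp cp cm (a b : cseq) : cseq := AL_alpha rm rp cp cm a b zero_seq.
Definition XB rm rp cp cm (a b : cseq) : cseq := AL_beta rm rp cp cm a b zero_seq.

Lemma Loc_XA rm rp cp cm : Loc (XA rm rp cp cm).
Proof.
  unfold XA, AL_alpha.
  apply (Loc_minus _ (fun a b n => coefF_pred Mi cm a b rm (n - 1)%Z)).
  apply (Loc_plus _ (fun a b n => coefF_pred Pl cp a b rp n)).
  apply Loc_minus.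
  apply (Loc_const (Copp (Cmult Ci (zero_seq 0%Z)))).
  apply (Loc_mult (fun a b => a)). apply Loc_a.
  apply (Loc_plus (fun a b => coefG Pl cp a b rp) (fun a b n => coefG Mi cm a b rm (n-1)%Z)).
  apply Loc_coefG. apply (Loc_sm (fun a b => coefG Mi cm a b rm)). apply Loc_coefG.
  apply Loc_coefF_pred.
  apply (Loc_sm (fun a b => coefF_pred Mi cm a b rm)). apply Loc_coefF_pred.
Qed.

Lemma Loc_XB rm rp cp cm : Loc (XB rm rp cp cm).
Proof.
  unfold XB, AL_beta.
  apply (Loc_plus _ (fun a b n => coefH_pred Pl cp a b rp (n - 1)%Z)).
  apply (Loc_minus _ (fun a b n => coefH_pred Mi cm a b rm n)).
  apply Loc_plus.
  apply (Loc_const (Copp (Cmult Ci (zero_seq 0%Z)))).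
  apply (Loc_mult (fun a b => b)). apply Loc_b.
  apply (Loc_plus (fun a b n => coefG Pl cp a b rp (n-1)%Z) (fun a b => coefG Mi cm a b rm)).
  apply (Loc_sm (fun a b => coefG Pl cp a b rp)). apply Loc_coefG. apply Loc_coefG.
  apply Loc_coefH_pred.
  apply (Loc_sm (fun a b => coefH_pred Pl cp a b rp)). apply Loc_coefH_pred.
Qed.

Lemma solve_a x y z w u : Cminus (Cplus (Cminus (Copp (Cmult Ci x)) y) z) w = RtoC 0 ->
  Cminus (Cplus (Cminus (Copp (Cmult Ci (RtoC 0))) y) z) w = u -> x = Copp (Cmult Ci u).
Proof.
  intros H1 H2. subst u. destruct x, y, z, w. unfold Cminus, Cplus, Copp, Cmult, RtoC, Ci in *. simpl in *.
  injection H1; intros. f_equal; lra.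
Qed.
Lemma solve_b x y z w u : Cplus (Cminus (Cplus (Copp (Cmult Ci x)) y) z) w = RtoC 0 ->
  Cplus (Cminus (Cplus (Copp (Cmult Ci (RtoC 0))) y) z) w = u -> x = Copp (Cmult Ci u).
Proof.
  intros H1 H2. subst u. destruct x, y, z, w. unfold Cminus, Cplus, Copp, Cmult, RtoC, Ci in *. simpl in *.
  injection H1; intros. f_equal; lra.
Qed.

Lemma AL_da rm rp cp cm a b da n : AL_alpha rm rp cp cm a b da n = RtoC 0 ->
  da n = Copp (Cmult Ci (XA rm rp cp cm a b n)).
Proof. intros H. eapply solve_a. exact H. reflexivity. Qed.
Lemma AL_db rm rp cp cm a b db n : AL_beta rm rp cp cm a b db n = RtoC 0 ->
  db n = Copp (Cmult Ci (XB rm rp cp cm a b n)).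
Proof. intros H. eapply solve_b. exact H. reflexivity. Qed.

Lemma Cmod_mi (x y : C) : Cmod (Cminus (Copp (Cmult Ci x)) (Copp (Cmult Ci y))) = Cmod (Cminus x y).
Proof.
  replace (Cminus (Copp (Cmult Ci x)) (Copp (Cmult Ci y))) with (Cmult (Copp Ci) (Cminus x y)) by Ceq.
  rewrite Cmod_mult. replace (Cmod (Copp Ci)) with 1. ring.
  unfold Cmod, Copp, Ci. simpl. symmetry. transitivity (sqrt 1). f_equal; ring. apply sqrt_1.
Qed.
Lemma Cmod_mi1 (x : C) : Cmod (Copp (Cmult Ci x)) = Cmod x.
Proof.
  replace (Copp (Cmult Ci x)) with (Cminus (Copp (Cmult Ci x)) (Copp (Cmult Ci (RtoC 0)))) by Ceq.
  rewrite Cmod_mi. f_equal. Ceq.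
Qed.

Lemma exp_le' x y : x <= y -> exp x <= exp y.
Proof. intros [H|H]. left; apply exp_increasing; auto. subst; lra. Qed.

Lemma ln_le' x y : 0 < x -> x <= y -> ln x <= ln y.
Proof. intros H [H1|H1]. left; apply ln_increasing; auto. subst; lra. Qed.

Lemma abspow_nonneg x q : 0 <= abspow x q.
Proof. unfold abspow. destruct Req_EM_T. lra. unfold Rpower. left; apply exp_pos. Qed.

Lemma abspow_0 q : abspow 0 q = 0.
Proof. unfold abspow. destruct Req_EM_T; lra. Qed.

Lemma abspow_pos x q : 0 < x -> abspow x q = Rpower x q.
Proof. intros H. unfold abspow. destruct Req_EM_T. lra. rewrite Rabs_right by lra. reflexivity. Qed.

Lemma abspow_mono q x y : 1 <= q -> 0 <= x <= y -> abspow x q <= abspow y q.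
Proof.
  intros Hq [H0 H1]. destruct H0 as [H0|H0].
  - rewrite !abspow_pos by lra. apply Rle_Rpower_l; lra.
  - subst. rewrite abspow_0. apply abspow_nonneg.
Qed.

Lemma abspow_mult q x y : 0 <= x -> 0 <= y -> abspow (x * y) q = abspow x q * abspow y q.
Proof.
  intros [Hx|Hx] [Hy|Hy].
  - rewrite !abspow_pos; try nra. rewrite Rpower_mult_distr; auto.
  - subst. rewrite Rmult_0_r, abspow_0. ring.
  - subst. rewrite Rmult_0_l, abspow_0. ring.
  - subst. rewrite Rmult_0_l, abspow_0. ring.
Qed.

Lemma abspow_le_self q x : 1 <= q -> 0 <= x <= 1 -> abspow x q <= x.
Proof.
  intros Hq [[H0|H0] H1].
  - rewrite abspow_pos by lra. unfold Rpower.
    rewrite <- (exp_ln x) at 2 by lra. apply exp_le'.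
    assert (ln x <= 0) by (rewrite <- ln_1; apply ln_le'; lra). nra.
  - subst. rewrite abspow_0. lra.
Qed.

Lemma abspow_max q x y : abspow (Rmax x y) q <= abspow x q + abspow y q.
Proof.
  pose proof (abspow_nonneg x q). pose proof (abspow_nonneg y q).
  unfold Rmax. destruct Rle_dec; lra.
Qed.

Fixpoint Zmax (N : nat) (f : Z -> R) : R :=
  match N with
  | O => f 0%Z
  | S N' => Rmax (Rmax (Zmax N' f) (f (Z.of_nat N))) (f (- Z.of_nat N)%Z)
  end.

Lemma Zmax_nonneg N f : (forall j, 0 <= f j) -> 0 <= Zmax N f.
Proof.
  intros H; induction N; simpl. apply H.
  eapply Rle_trans. 2: apply Rmax_l. eapply Rle_trans. 2: apply Rmax_l. auto.
Qed.

Lemma Zsum_le_Zmax N f : Zsum N f <= (2 * INR N + 1) * Zmax N f.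
Proof.
  induction N. simpl. lra.
  cbn [Zsum Zmax]. rewrite S_INR.
  pose proof (Rmax_l (Zmax N f) (f (Z.of_nat (S N)))). pose proof (Rmax_r (Zmax N f) (f (Z.of_nat (S N)))).
  pose proof (Rmax_l (Rmax (Zmax N f) (f (Z.of_nat (S N)))) (f (- Z.of_nat (S N))%Z)).
  pose proof (Rmax_r (Rmax (Zmax N f) (f (Z.of_nat (S N)))) (f (- Z.of_nat (S N))%Z)).
  set (m := Rmax (Rmax (Zmax N f) (f (Z.of_nat (S N)))) (f (- Z.of_nat (S N))%Z)) in *.
  assert (INR N >= 0) by (apply Rle_ge, pos_INR).
  assert ((2 * INR N + 1) * Zmax N f <= (2 * INR N + 1) * m) by (apply Rmult_le_compat_l; lra).
  nra.
Qed.

Lemma abspow_Zmax q N f : abspow (Zmax N f) q <= Zsum N (fun j => abspow (f j) q).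
Proof.
  induction N. simpl. lra.
  cbn [Zsum Zmax].
  eapply Rle_trans. apply abspow_max. 
  pose proof (abspow_max q (Zmax N f) (f (Z.of_nat (S N)))). lra.
Qed.

Lemma abspow_Zsum q N f : 1 <= q -> (forall j, 0 <= f j) ->
  abspow (Zsum N f) q <= abspow (2 * INR N + 1) q * Zsum N (fun j => abspow (f j) q).
Proof.
  intros Hq H. pose proof (pos_INR N).
  eapply Rle_trans. apply abspow_mono. auto. split. apply Zsum_nonneg; auto. apply Zsum_le_Zmax.
  rewrite abspow_mult by (try lra; apply Zmax_nonneg; auto).
  apply Rmult_le_compat_l. apply abspow_nonneg. apply abspow_Zmax.
Qed.

Lemma abspow_sum3 q x y z : 1 <= q -> 0 <= x -> 0 <= y -> 0 <= z ->
  abspow (x + y + z) q <= abspow 3 q * (abspow x q + abspow y q + abspow z q).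
Proof.
  intros Hq Hx Hy Hz.
  assert (x + y + z <= 3 * Rmax x (Rmax y z)).
  { pose proof (Rmax_l x (Rmax y z)). pose proof (Rmax_r x (Rmax y z)). pose proof (Rmax_l y z). pose proof (Rmax_r y z). lra. }
  eapply Rle_trans. apply abspow_mono. auto. split. lra. eauto.
  rewrite abspow_mult by (try lra; apply (Rle_trans _ x); auto; apply Rmax_l).
  apply Rmult_le_compat_l. apply abspow_nonneg.
  pose proof (abspow_max q x (Rmax y z)). pose proof (abspow_max q y z). lra.
Qed.

Lemma abspow_sum2 q x y : 1 <= q -> 0 <= x -> 0 <= y ->
  abspow (x + y) q <= abspow 2 q * (abspow x q + abspow y q).
Proof.
  intros Hq Hx Hy.
  assert (x + y <= 2 * Rmax x y).
  { pose proof (Rmax_l x y). pose proof (Rmax_r x y). lra. }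
  eapply Rle_trans. apply abspow_mono. auto. split. lra. eauto.
  rewrite abspow_mult by (try lra; apply (Rle_trans _ x); auto; apply Rmax_l).
  apply Rmult_le_compat_l. apply abspow_nonneg. apply abspow_max.
Qed.

Lemma abspow_split q x y : 1 <= q -> 0 <= x -> 0 <= y ->
  abspow x q + abspow y q <= 2 * abspow (x + y) q.
Proof.
  intros. pose proof (abspow_mono q x (x+y) H ltac:(lra)). pose proof (abspow_mono q y (x+y) H ltac:(lra)). lra.
Qed.

Lemma Zsum_const N c : Zsum N (fun _ => c) = (2 * INR N + 1) * c.
Proof. induction N. simpl. ring. rewrite Zsum_S, IHN, S_INR. ring. Qed.

Lemma sum_f_R0_ext f g m : (forall k, (k <= m)%nat -> f k = g k) -> sum_f_R0 f m = sum_f_R0 g m.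
Proof.
  induction m; simpl; intros H. apply H; lia. rewrite IHm by (intros; apply H; lia). rewrite H by lia. reflexivity.
Qed.

Lemma Zsum_sumf N F : sum_f_R0 (fun k => F (Z.of_nat k - Z.of_nat N)%Z) (2 * N) = Zsum N F.
Proof.
  revert F. induction N; intros F.
  - simpl. reflexivity.
  - replace (2 * S N)%nat with (S (S (2 * N))) by lia.
    rewrite decomp_sum by lia. simpl pred. cbn [sum_f_R0].
    rewrite (sum_f_R0_ext _ (fun k => F (Z.of_nat k - Z.of_nat N)%Z)).
    2:{ intros k Hk. f_equal. lia. }
    rewrite IHN. rewrite Zsum_S.
    replace (Z.of_nat 0 - Z.of_nat (S N))%Z with (- (Z.of_nat N + 1))%Z by lia.
    replace (Z.of_nat (S (S (N + (N + 0)))) - Z.of_nat (S N))%Z with (Z.of_nat N + 1)%Z by lia.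
    ring.
Qed.

Lemma shift_pt (v : Z -> R) Cv : 1 <= Cv -> (forall n, 0 <= v n) ->
  (forall n, v n <= Cv * v (n+1)%Z /\ v n <= Cv * v (n-1)%Z) ->
  forall m j n, (Z.abs j <= Z.of_nat m)%Z -> v n <= Cv ^ m * v (n + j)%Z.
Proof.
  intros HC Hv Hs m. induction m; intros j n Hj.
  - replace j with 0%Z by lia. rewrite Z.add_0_r. simpl. lra.
  - simpl. destruct (Z.eq_dec j 0) as [->|Nz].
    + rewrite Z.add_0_r. assert (1 <= Cv ^ m) by (apply pow_R1_Rle; lra).
      assert (1 <= Cv * Cv ^ m) by nra. pose proof (Hv n). nra.
    + destruct (Z_lt_le_dec 0 j).
      * pose proof (IHm (j-1)%Z n ltac:(lia)). destruct (Hs (n + (j-1))%Z) as [H1 _].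
        replace (n + (j - 1) + 1)%Z with (n + j)%Z in H1 by lia.
        assert (0 <= Cv ^ m) by (apply pow_le; lra). nra.
      * pose proof (IHm (j+1)%Z n ltac:(lia)). destruct (Hs (n + (j+1))%Z) as [_ H1].
        replace (n + (j + 1) - 1)%Z with (n + j)%Z in H1 by lia.
        assert (0 <= Cv ^ m) by (apply pow_le; lra). nra.
Qed.

Lemma Zsum_shiftj (h : Z -> R) : (forall x, 0 <= h x) ->
  forall m j N, (Z.abs j <= Z.of_nat m)%Z -> Zsum N (fun n => h (n + j)%Z) <= Zsum (N + m) h.
Proof.
  intros Hh m. induction m; intros j N Hj.
  - replace j with 0%Z by lia. rewrite Nat.add_0_r. apply Req_le, Zsum_ext. intros; f_equal; lia.
  - destruct (Z.eq_dec j 0) as [->|Nz].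
    + rewrite (Zsum_ext _ _ h) by (intros; f_equal; lia). apply Zsum_monoN; auto. lia.
    + destruct (Z_lt_le_dec 0 j).
      * rewrite (Zsum_ext _ _ (fun n => h ((n + 1) + (j - 1))%Z)) by (intros; f_equal; lia).
        eapply Rle_trans. apply (Zsum_shift_p N (fun x => h (x + (j-1))%Z)). auto.
        replace (N + S m)%nat with (S N + m)%nat by lia. apply IHm. lia.
      * rewrite (Zsum_ext _ _ (fun n => h ((n - 1) + (j + 1))%Z)) by (intros; f_equal; lia).
        eapply Rle_trans. apply (Zsum_shift_m N (fun x => h (x + (j+1))%Z)). auto.
        replace (N + S m)%nat with (S N + m)%nat by lia. apply IHm. lia.
Qed.

Lemma lub_fix (P : R -> Prop) A c : 0 <= A -> 0 <= c <= 1/2 ->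
  (exists x, P x) -> (exists Y, forall x, P x -> x <= Y) ->
  (forall Y, (forall x, P x -> x <= Y) -> forall x, P x -> x <= A + c * Y) ->
  forall x, P x -> x <= 2 * A.
Proof.
  intros HA Hc He Hb H.
  assert (Hb' : bound P) by (destruct Hb as [Y HY]; exists Y; intros x Hx; apply HY; auto).
  destruct (completeness P Hb' He) as [m [Hm1 Hm2]].
  assert (Hup : forall x, P x -> x <= m) by (intros; apply Hm1; auto).
  assert (m <= A + c * m) by (apply Hm2; intros x Hx; apply (H m Hup x Hx)).
  intros x Hx. pose proof (Hup x Hx). nra.
Qed.

Definition vw (w : Z -> R) (R0 : R) (n : Z) : R := Rmin (w n) (R0 * (/2) ^ (Z.abs_nat n)).

Lemma half_pow_dec a b : (b <= a)%nat -> (/2) ^ a <= (/2) ^ b.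
Proof.
  intros H. replace a with (b + (a - b))%nat by lia. rewrite pow_add.
  assert ((/2) ^ (a - b) <= 1 ^ (a - b)) by (apply pow_incr; lra). rewrite pow1 in H0.
  assert (0 <= (/2) ^ b) by (apply pow_le; lra). nra.
Qed.

Lemma half_pow_shift k k' : (k' <= S k)%nat -> (/2) ^ k <= 2 * (/2) ^ k'.
Proof.
  intros H. pose proof (half_pow_dec (S k) k' H). simpl in H0. lra.
Qed.

Lemma vw_nonneg w R0 n : 0 <= w n -> 0 <= R0 -> 0 <= vw w R0 n.
Proof. intros. unfold vw. apply Rmin_glb; auto. apply Rmult_le_pos; auto. apply pow_le; lra. Qed.

Lemma vw_le w R0 n : vw w R0 n <= w n.
Proof. apply Rmin_l. Qed.

Lemma Rmin_scale C0 x y x' y' : 0 <= C0 -> x <= C0 * x' -> y <= C0 * y' -> Rmin x y <= C0 * Rmin x' y'.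
Proof.
  intros. unfold Rmin at 2. destruct Rle_dec. eapply Rle_trans. apply Rmin_l. auto.
  eapply Rle_trans. apply Rmin_r. auto.
Qed.

Lemma vw_shift w M R0 : 0 <= R0 -> (forall n, 0 <= w n /\ w n <= M * w (n+1)%Z /\ w n <= M * w (n-1)%Z) ->
  forall n, vw w R0 n <= Rmax M 2 * vw w R0 (n+1)%Z /\ vw w R0 n <= Rmax M 2 * vw w R0 (n-1)%Z.
Proof.
  intros HR Hw n. unfold vw. destruct (Hw n) as [H0 [H1 H2]].
  pose proof (Rmax_l M 2). pose proof (Rmax_r M 2).
  assert (Hn1 := Hw (n+1)%Z). assert (Hn2 := Hw (n-1)%Z).
  split; apply Rmin_scale; try lra.
  - assert (M * w (n+1)%Z <= Rmax M 2 * w (n+1)%Z) by (apply Rmult_le_compat_r; lra). lra.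
  - assert ((/2) ^ Z.abs_nat n <= 2 * (/2) ^ Z.abs_nat (n+1)) by (apply half_pow_shift; lia).
    assert (0 <= (/2) ^ Z.abs_nat (n+1)) by (apply pow_le; lra).
    assert (R0 * (/ 2) ^ Z.abs_nat n <= R0 * (2 * (/2) ^ Z.abs_nat (n+1))) by (apply Rmult_le_compat_l; lra).
    assert (2 * (R0 * (/2) ^ Z.abs_nat (n+1)) <= Rmax M 2 * (R0 * (/2) ^ Z.abs_nat (n+1))) by (apply Rmult_le_compat_r; nra).
    nra.
  - assert (M * w (n-1)%Z <= Rmax M 2 * w (n-1)%Z) by (apply Rmult_le_compat_r; lra). lra.
  - assert ((/2) ^ Z.abs_nat n <= 2 * (/2) ^ Z.abs_nat (n-1)) by (apply half_pow_shift; lia).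
    assert (0 <= (/2) ^ Z.abs_nat (n-1)) by (apply pow_le; lra).
    assert (R0 * (/ 2) ^ Z.abs_nat n <= R0 * (2 * (/2) ^ Z.abs_nat (n-1))) by (apply Rmult_le_compat_l; lra).
    assert (2 * (R0 * (/2) ^ Z.abs_nat (n-1)) <= Rmax M 2 * (R0 * (/2) ^ Z.abs_nat (n-1))) by (apply Rmult_le_compat_r; nra).
    nra.
Qed.

Lemma Zsum_half N : Zsum N (fun n => (/2) ^ Z.abs_nat n) = 3 - 2 * (/2) ^ N.
Proof.
  induction N. simpl. lra.
  rewrite Zsum_S, IHN.
  replace (Z.abs_nat (Z.of_nat N + 1)) with (S N) by lia.
  replace (Z.abs_nat (- (Z.of_nat N + 1))) with (S N) by lia.
  simpl. field.
Qed.

Lemma vw_sum w R0 N : 0 <= R0 -> Zsum N (vw w R0) <= 3 * R0.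
Proof.
  intros HR. eapply Rle_trans. apply (Zsum_le _ _ (fun n => R0 * (/2) ^ Z.abs_nat n)).
  intros; apply Rmin_r. rewrite Zsum_scal, Zsum_half.
  assert (0 <= (/2) ^ N) by (apply pow_le; lra). nra.
Qed.

Lemma vw_eq w R0 n : 0 <= w n -> w n * 2 ^ Z.abs_nat n <= R0 -> vw w R0 n = w n.
Proof.
  intros H0 H. unfold vw. apply Rmin_left.
  assert (E : 2 ^ Z.abs_nat n * (/2) ^ Z.abs_nat n = 1) by (rewrite <- Rpow_mult_distr; replace (2 * /2) with 1 by field; apply pow1).
  assert (0 <= (/2) ^ Z.abs_nat n) by (apply pow_le; lra).
  apply (Rmult_le_compat_r ((/2) ^ Z.abs_nat n)) in H; auto.
  rewrite Rmult_assoc, E in H. lra.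
Qed.

Definition DD (ua ub : Z -> R -> C) (m : Z) (t : R) : R := Cmod (ua m t) + Cmod (ub m t).
Definition ee (E : R) (K0 : nat) (n : Z) : R := if (Z.abs n <=? Z.of_nat K0)%Z then E else 0.

Definition Setting (ua ub dua dub : Z -> R -> C) (t0 T B L E : R) (K K0 : nat) : Prop :=
  0 <= B /\ 0 <= L /\ 0 <= E /\
  forall n t, t0 - T < t < t0 + T ->
    Cmod (ua n t) <= B /\ Cmod (ub n t) <= B /\
    is_derive (fun s => ua n s) t (dua n t) /\ is_derive (fun s => ub n s) t (dub n t) /\
    Cmod (dua n t) <= L * Zsum K (fun j => DD ua ub (n + j)%Z t) + ee E K0 n /\
    Cmod (dub n t) <= L * Zsum K (fun j => DD ua ub (n + j)%Z t) + ee E K0 n.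

Lemma DD_nonneg ua ub m t : 0 <= DD ua ub m t.
Proof. unfold DD. pose proof (Cmod_ge_0 (ua m t)). pose proof (Cmod_ge_0 (ub m t)). lra. Qed.

Lemma ee_nonneg E K0 n : 0 <= E -> 0 <= ee E K0 n.
Proof. unfold ee. destruct Z.leb; lra. Qed.

Lemma Cmod_step (x y : C) : Cmod x <= Cmod y + Cmod (Cminus x y).
Proof.
  replace x with (Cplus y (Cminus x y)) at 1 by Ceq. apply Cmod_triangle.
Qed.

Lemma S_exists ua ub dua dub t0 T B L E K K0 t1 t2 :
  Setting ua ub dua dub t0 T B L E K K0 ->
  t0 - T < t1 < t0 + T -> t0 - T < t2 < t0 + T ->
  exists S : Z -> R,
    (forall n s, Rmin t1 t2 <= s <= Rmax t1 t2 -> DD ua ub n s <= S n) /\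
    (forall n, S n <= 2 * B) /\
    (forall n, S n <= DD ua ub n t1 + 4 * Rabs (t2 - t1) *
                 (L * Zsum K (fun j => S (n + j)%Z) + ee E K0 n)).
Proof.
  intros [HB [HL [HE HS]]] Ht1 Ht2.
  assert (HJ : forall s, Rmin t1 t2 <= s <= Rmax t1 t2 -> t0 - T < s < t0 + T).
  { intros s Hs. unfold Rmin, Rmax in Hs. destruct Rle_dec; lra. }
  set (P := fun n x => exists s, Rmin t1 t2 <= s <= Rmax t1 t2 /\ x = DD ua ub n s).
  assert (Hb : forall n, bound (P n)).
  { intros n. exists (2 * B). intros x [s [Hs ->]]. destruct (HS n s (HJ s Hs)) as [A1 [A2 _]].
    unfold DD. lra. }
  assert (He : forall n, exists x, P n x).
  { intros n. exists (DD ua ub n t1). exists t1. split; auto. unfold Rmin, Rmax; destruct Rle_dec; lra. }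
  pose (S := fun n => proj1_sig (completeness (P n) (Hb n) (He n))).
  exists S.
  assert (Hlub : forall n, is_lub (P n) (S n)).
  { intros n. unfold S. destruct (completeness (P n) (Hb n) (He n)). simpl. auto. }
  assert (H1 : forall n s, Rmin t1 t2 <= s <= Rmax t1 t2 -> DD ua ub n s <= S n).
  { intros n s Hs. apply (proj1 (Hlub n)). exists s. auto. }
  split; [exact H1|]. split.
  - intros n. apply (proj2 (Hlub n)). intros x [s [Hs ->]]. destruct (HS n s (HJ s Hs)) as [A1 [A2 _]].
    unfold DD. lra.
  - intros n. apply (proj2 (Hlub n)). intros x [s [Hs ->]].
    set (Q := L * Zsum K (fun j => S (n + j)%Z) + ee E K0 n).
    assert (HQ : forall x, Rmin t1 t2 <= x <= Rmax t1 t2 ->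
              Cmod (dua n x) <= Q /\ Cmod (dub n x) <= Q).
    { intros y Hy. destruct (HS n y (HJ y Hy)) as [_ [_ [_ [_ [D1 D2]]]]].
      assert (Zsum K (fun j => DD ua ub (n + j)%Z y) <= Zsum K (fun j => S (n + j)%Z)).
      { apply Zsum_le. intros j _. apply H1. auto. }
      assert (L * Zsum K (fun j => DD ua ub (n + j)%Z y) <= L * Zsum K (fun j => S (n + j)%Z)) by (apply Rmult_le_compat_l; auto).
      unfold Q. lra. }
    assert (Hsub : forall y, Rmin t1 s <= y <= Rmax t1 s -> Rmin t1 t2 <= y <= Rmax t1 t2).
    { intros y Hy. unfold Rmin, Rmax in *. destruct (Rle_dec t1 t2), (Rle_dec t1 s); lra. }
    assert (Hd : Rabs (s - t1) <= Rabs (t2 - t1)).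
    { unfold Rmin, Rmax in Hs. unfold Rabs. destruct (Rle_dec t1 t2), (Rcase_abs (s - t1)), (Rcase_abs (t2 - t1)); lra. }
    assert (Ca := cmvt (fun s => ua n s) (fun s => dua n s) t1 s Q).
    assert (Cb := cmvt (fun s => ub n s) (fun s => dub n s) t1 s Q).
    simpl in Ca, Cb.
    assert (Ma : Cmod (Cminus (ua n s) (ua n t1)) <= 2 * Q * Rabs (s - t1)).
    { apply Ca. intros y Hy. split. apply (HS n y). apply HJ, Hsub, Hy. apply HQ, Hsub, Hy. }
    assert (Mb : Cmod (Cminus (ub n s) (ub n t1)) <= 2 * Q * Rabs (s - t1)).
    { apply Cb. intros y Hy. split. apply (HS n y). apply HJ, Hsub, Hy. apply HQ, Hsub, Hy. }
    assert (0 <= Q).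
    { unfold Q. pose proof (ee_nonneg E K0 n HE). 
      assert (0 <= Zsum K (fun j => S (n + j)%Z)).
      { apply Zsum_nonneg. intros j. eapply Rle_trans. apply (DD_nonneg ua ub (n+j)%Z t1). apply H1.
        unfold Rmin, Rmax; destruct Rle_dec; lra. }
      nra. }
    assert (2 * Q * Rabs (s - t1) <= 2 * Q * Rabs (t2 - t1)) by (apply Rmult_le_compat_l; lra).
    pose proof (Cmod_step (ua n s) (ua n t1)). pose proof (Cmod_step (ub n s) (ub n t1)).
    assert (4 * Rabs (t2 - t1) * Q = 2 * Q * Rabs (t2 - t1) + 2 * Q * Rabs (t2 - t1)) by ring.
    unfold DD. lra.
Qed.

Lemma Zsum_supp N K0 f : (forall j, 0 <= f j) -> (forall j, (Z.of_nat K0 < Z.abs j)%Z -> f j = 0) ->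
  Zsum N f <= Zsum K0 f.
Proof.
  intros H0 Hz. destruct (le_lt_dec N K0). apply Zsum_monoN; auto.
  assert (E : forall d, Zsum (K0 + d) f = Zsum K0 f).
  { induction d. rewrite Nat.add_0_r; auto.
    replace (K0 + S d)%nat with (S (K0 + d)) by lia. rewrite Zsum_S, IHd.
    rewrite !Hz by lia. ring. }
  replace N with (K0 + (N - K0))%nat by lia. rewrite E. lra.
Qed.

Definition Cvv M0 := Rmax M0 2.
Definition hstep q L K M0 := / (8 * (L + 1) * (1 + abspow 3 q * abspow (2 * INR K + 1) q * ((2 * INR K + 1) * Cvv M0 ^ K) + (2 * INR K + 1) * Cvv M0 ^ K)).

Lemma hstep_pos q L K M0 : 0 <= L -> 0 < hstep q L K M0.
Proof.
  intros HL. unfold hstep. apply Rinv_0_lt_compat.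
  pose proof (abspow_nonneg 3 q). pose proof (abspow_nonneg (2 * INR K + 1) q). pose proof (pos_INR K).
  assert (1 <= Cvv M0) by (unfold Cvv; pose proof (Rmax_r M0 2); lra).
  assert (1 <= Cvv M0 ^ K) by (apply pow_R1_Rle; lra).
  assert (0 <= abspow 3 q * abspow (2 * INR K + 1) q) by nra.
  assert (0 <= abspow 3 q * abspow (2 * INR K + 1) q * ((2 * INR K + 1) * Cvv M0 ^ K)) by (apply Rmult_le_pos; nra).
  assert (0 < (2 * INR K + 1) * Cvv M0 ^ K) by nra.
  apply Rmult_lt_0_compat; lra.
Qed.

Lemma hstep_small q L K M0 d : 0 <= L -> 0 <= d -> d <= hstep q L K M0 ->
  4 * d * L <= 1/2 /\
  abspow 3 q * abspow (2 * INR K + 1) q * ((2 * INR K + 1) * Cvv M0 ^ K) * (4 * d * L) <= 1/2 /\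
  (2 * INR K + 1) * Cvv M0 ^ K * (4 * d * L) <= 1/2.
Proof.
  intros HL Hd H. unfold hstep in H.
  pose proof (abspow_nonneg 3 q). pose proof (abspow_nonneg (2 * INR K + 1) q). pose proof (pos_INR K).
  assert (1 <= Cvv M0) by (unfold Cvv; pose proof (Rmax_r M0 2); lra).
  assert (1 <= Cvv M0 ^ K) by (apply pow_R1_Rle; lra).
  set (Z1 := (2 * INR K + 1) * Cvv M0 ^ K) in *.
  set (Y := abspow 3 q * abspow (2 * INR K + 1) q * Z1) in *.
  assert (0 <= Y) by (unfold Y, Z1; apply Rmult_le_pos; nra).
  assert (1 <= Z1) by (unfold Z1; nra).
  set (X := 8 * (L + 1) * (1 + Y + Z1)) in *.
  assert (0 < X) by (unfold X; nra).
  assert (d * X <= 1).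
  { apply (Rmult_le_compat_r X) in H; try lra. rewrite Rinv_l in H; lra. }
  unfold X in *. assert (0 <= d * L) by nra.
  assert (d * L * (1 + Y + Z1) <= d * (L + 1) * (1 + Y + Z1)) by (apply Rmult_le_compat_r; nra).
  split; [|split]; nra.
Qed.

Lemma step_fin ua ub dua dub t0 T B L E K K0 (w : Z -> R) M0 q t1 t2 :
  Setting ua ub dua dub t0 T B L E K K0 -> 1 <= q ->
  (forall n, 0 <= w n /\ w n <= M0 * w (n+1)%Z /\ w n <= M0 * w (n-1)%Z) ->
  t0 - T < t1 < t0 + T -> t0 - T < t2 < t0 + T ->
  Rabs (t2 - t1) <= hstep q L K M0 ->
  (exists B1, forall N, Zsum N (fun n => w n * (abspow (Cmod (ua n t1)) q + abspow (Cmod (ub n t1)) q)) <= B1) ->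
  (exists B2, forall N, Zsum N (fun n => w n * (abspow (Cmod (ua n t2)) q + abspow (Cmod (ub n t2)) q)) <= B2).
Proof.
  intros HS Hq Hw Ht1 Ht2 Hh [B1 HB1].
  pose proof HS as [HB [HL [HE _]]].
  destruct (S_exists _ _ _ _ _ _ _ _ _ _ _ t1 t2 HS Ht1 Ht2) as [S [HS1 [HS2 HS3]]].
  set (d := Rabs (t2 - t1)) in *.
  assert (Hd0 : 0 <= d) by apply Rabs_pos.
  destruct (hstep_small q L K M0 d HL Hd0 Hh) as [Hs1 [Hs2 _]].
  set (Cv := Cvv M0) in *.
  assert (HCv : 1 <= Cv) by (unfold Cv, Cvv; pose proof (Rmax_r M0 2); lra).
  set (k1 := 2 * INR K + 1) in *.
  assert (Hk1 : 1 <= k1) by (unfold k1; pose proof (pos_INR K); lra).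
  set (Z1 := k1 * Cv ^ K) in *.
  assert (HZ1 : 1 <= Z1) by (unfold Z1; assert (1 <= Cv ^ K) by (apply pow_R1_Rle; lra); nra).
  set (p3 := abspow 3 q). set (p2 := abspow 2 q). set (pk := abspow k1 q).
  assert (Hp3 : 0 <= p3) by apply abspow_nonneg. assert (Hp2 : 0 <= p2) by apply abspow_nonneg.
  assert (Hpk : 0 <= pk) by apply abspow_nonneg.
  assert (HSn : forall n, 0 <= S n).
  { intros n. eapply Rle_trans. apply (DD_nonneg ua ub n t1). apply HS1. unfold Rmin, Rmax; destruct Rle_dec; lra. }
  set (pS := fun n => abspow (S n) q).
  assert (HpS : forall n, 0 <= pS n) by (intros; apply abspow_nonneg).
  assert (HB1p : 0 <= B1).
  { eapply Rle_trans. 2: apply (HB1 O). simpl. apply Rmult_le_pos. apply Hw.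
    pose proof (abspow_nonneg (Cmod (ua 0%Z t1)) q). pose proof (abspow_nonneg (Cmod (ub 0%Z t1)) q). lra. }
  set (Z0 := Zsum K0 (fun n => w n * abspow (ee E K0 n) q)).
  assert (HZ0 : 0 <= Z0).
  { apply Zsum_nonneg. intros; apply Rmult_le_pos. apply Hw. apply abspow_nonneg. }
  set (A := p3 * (p2 * B1 + abspow (4 * d) q * Z0)).
  assert (HA : 0 <= A).
  { unfold A. pose proof (abspow_nonneg (4 * d) q). apply Rmult_le_pos; auto.
    apply Rplus_le_le_0_compat; apply Rmult_le_pos; auto. }
  set (c := p3 * pk * Z1 * (4 * d * L)).
  assert (Hc : 0 <= c <= 1/2).
  { split. unfold c. apply Rmult_le_pos. apply Rmult_le_pos. nra. lra. nra. exact Hs2. }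
  exists (4 * A). intros N.
  set (R0 := Zsum N (fun n => w n * 2 ^ Z.abs_nat n)).
  assert (HR0 : 0 <= R0).
  { apply Zsum_nonneg. intros; apply Rmult_le_pos. apply Hw. apply pow_le; lra. }
  set (v := vw w R0).
  assert (Hv : forall n, 0 <= v n) by (intros; apply vw_nonneg; auto; apply Hw).
  assert (Hvs : forall n, v n <= Cv * v (n+1)%Z /\ v n <= Cv * v (n-1)%Z).
  { intros n. apply (vw_shift w M0 R0 HR0 Hw n). }
  set (Phi := fun N' => Zsum N' (fun n => v n * pS n)).
  assert (Hineq : forall N', Phi N' <= A + c * Phi (N' + K)%nat).
  { intros N'.
    set (T1 := fun n => v n * abspow (DD ua ub n t1) q).
    set (T2 := fun n => v n * abspow (Zsum K (fun j => S (n + j)%Z)) q).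
    set (T3 := fun n => v n * abspow (ee E K0 n) q).
    assert (Hpt : forall n, v n * pS n <= p3 * T1 n + (p3 * abspow (4 * d * L) q) * T2 n + (p3 * abspow (4 * d) q) * T3 n).
    { intros n. unfold pS, T1, T2, T3.
      assert (HZs : 0 <= Zsum K (fun j => S (n + j)%Z)) by (apply Zsum_nonneg; auto).
      pose proof (ee_nonneg E K0 n HE).
      assert (S n <= DD ua ub n t1 + (4 * d * L) * Zsum K (fun j => S (n + j)%Z) + (4 * d) * ee E K0 n).
      { pose proof (HS3 n). fold d in H0. lra. }
      assert (abspow (S n) q <= p3 * (abspow (DD ua ub n t1) q + abspow (4 * d * L) q * abspow (Zsum K (fun j => S (n + j)%Z)) q + abspow (4 * d) q * abspow (ee E K0 n) q)).
      { eapply Rle_trans. apply abspow_mono. auto. split. auto. exact H0.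
        rewrite <- !abspow_mult by nra. apply abspow_sum3; auto. apply DD_nonneg. all: repeat apply Rmult_le_pos; try lra; auto. }
      pose proof (Hv n).
      apply (Rmult_le_compat_l (v n)) in H1; auto. nra. }
    assert (HT1 : Zsum N' T1 <= p2 * B1).
    { eapply Rle_trans. apply (Zsum_le _ _ (fun n => p2 * (w n * (abspow (Cmod (ua n t1)) q + abspow (Cmod (ub n t1)) q)))).
      intros n _. unfold T1, DD. 
      pose proof (abspow_sum2 q (Cmod (ua n t1)) (Cmod (ub n t1)) Hq (Cmod_ge_0 _) (Cmod_ge_0 _)).
      pose proof (vw_le w R0 n). pose proof (Hv n). pose proof (abspow_nonneg (Cmod (ua n t1) + Cmod (ub n t1)) q).
      fold p2 in H. destruct (Hw n) as [Hw0 _].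
      assert (v n * abspow (Cmod (ua n t1) + Cmod (ub n t1)) q <= w n * abspow (Cmod (ua n t1) + Cmod (ub n t1)) q) by (apply Rmult_le_compat_r; auto).
      assert (w n * abspow (Cmod (ua n t1) + Cmod (ub n t1)) q <= w n * (p2 * (abspow (Cmod (ua n t1)) q + abspow (Cmod (ub n t1)) q))) by (apply Rmult_le_compat_l; auto).
      lra.
      rewrite Zsum_scal. apply Rmult_le_compat_l; auto. }
    assert (HT3 : Zsum N' T3 <= Z0).
    { eapply Rle_trans. apply (Zsum_le _ _ (fun n => w n * abspow (ee E K0 n) q)).
      intros n _. unfold T3. apply Rmult_le_compat_r. apply abspow_nonneg. apply vw_le.
      apply Zsum_supp. intros; apply Rmult_le_pos. apply Hw. apply abspow_nonneg.
      intros j Hj. unfold ee. replace (Z.abs j <=? Z.of_nat K0)%Z with false by (symmetry; apply Z.leb_gt; lia).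
      rewrite abspow_0. ring. }
    assert (HT2 : Zsum N' T2 <= pk * Z1 * Phi (N' + K)%nat).
    { eapply Rle_trans. apply (Zsum_le _ _ (fun n => pk * Zsum K (fun j => v n * pS (n + j)%Z))).
      intros n _. unfold T2. rewrite Zsum_scal.
      pose proof (abspow_Zsum q K (fun j => S (n + j)%Z) Hq (fun j => HSn (n+j)%Z)).
      fold k1 pk in H. apply (Rmult_le_compat_l (v n)) in H; auto. unfold pS. nra.
      rewrite Zsum_scal. rewrite (Zsum_swap N' K (fun n j => v n * pS (n + j)%Z)).
      eapply Rle_trans. apply Rmult_le_compat_l. auto.
      apply (Zsum_le _ _ (fun _ => Cv ^ K * Phi (N' + K)%nat)).
      { intros j Hj. eapply Rle_trans.
        apply (Zsum_le _ _ (fun n => Cv ^ K * (v (n + j)%Z * pS (n + j)%Z))).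
        intros n _. rewrite <- Rmult_assoc. apply Rmult_le_compat_r. auto.
        apply (shift_pt v Cv HCv Hv Hvs K j n Hj).
        rewrite Zsum_scal. apply Rmult_le_compat_l. apply pow_le; lra.
        apply (Zsum_shiftj (fun x => v x * pS x)). intros; apply Rmult_le_pos; auto. exact Hj. }
      rewrite Zsum_const. fold k1. unfold Z1. lra. }
    assert (Eq : Phi N' <= Zsum N' (fun n => p3 * T1 n + (p3 * abspow (4 * d * L) q) * T2 n + (p3 * abspow (4 * d) q) * T3 n)).
    { apply Zsum_le. intros; apply Hpt. }
    rewrite !Zsum_plus, !Zsum_scal in Eq.
    assert (Hp4 : abspow (4 * d * L) q <= 4 * d * L) by (apply abspow_le_self; auto; nra).
    assert (HPhi : 0 <= Phi (N' + K)%nat) by (apply Zsum_nonneg; intros; apply Rmult_le_pos; auto).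
    assert (HT2n : 0 <= Zsum N' T2) by (apply Zsum_nonneg; intros; apply Rmult_le_pos; auto; apply abspow_nonneg).
    assert (H4 : 0 <= abspow (4 * d) q) by apply abspow_nonneg.
    assert (E1 : p3 * Zsum N' T1 <= p3 * (p2 * B1)) by (apply Rmult_le_compat_l; auto).
    assert (E2 : p3 * abspow (4 * d * L) q * Zsum N' T2 <= c * Phi (N' + K)%nat).
    { apply Rle_trans with (p3 * ((4 * d * L) * (pk * Z1 * Phi (N' + K)%nat))).
      rewrite Rmult_assoc. apply Rmult_le_compat_l; auto. apply Rmult_le_compat; auto.
      apply abspow_nonneg. unfold c. right; ring. }
    assert (E3 : p3 * abspow (4 * d) q * Zsum N' T3 <= p3 * (abspow (4 * d) q * Z0)).
    { rewrite Rmult_assoc. apply Rmult_le_compat_l; auto. apply Rmult_le_compat_l; auto. }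
    assert (EA : A = p3 * (p2 * B1) + p3 * (abspow (4 * d) q * Z0)) by (unfold A; ring).
    lra. }
  assert (HPhiB : forall N', Phi N' <= 2 * A).
  { intros N'. apply (lub_fix (fun x => exists N'', x = Phi N'') A c HA Hc).
    - exists (Phi O). eauto.
    - exists (abspow (2 * B) q * (3 * R0)). intros x [N'' ->].
      eapply Rle_trans. apply (Zsum_le _ _ (fun n => abspow (2 * B) q * v n)).
      intros n _. rewrite Rmult_comm. apply Rmult_le_compat_r. auto. apply abspow_mono; auto.
      rewrite Zsum_scal. apply Rmult_le_compat_l. apply abspow_nonneg. apply vw_sum; auto.
    - intros Y HY x [N'' ->]. pose proof (Hineq N''). pose proof (HY (Phi (N''+K)%nat) (ex_intro _ _ eq_refl)).
      assert (c * Phi (N'' + K)%nat <= c * Y) by (apply Rmult_le_compat_l; lra). lra.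
    - exists N'; reflexivity. }
  eapply Rle_trans. apply (Zsum_le _ _ (fun n => 2 * (v n * pS n))).
  { intros n Hn. unfold v. rewrite vw_eq.
    - destruct (Hw n) as [Hw0 _]. 
      pose proof (abspow_split q (Cmod (ua n t2)) (Cmod (ub n t2)) Hq (Cmod_ge_0 _) (Cmod_ge_0 _)).
      assert (abspow (Cmod (ua n t2) + Cmod (ub n t2)) q <= pS n).
      { apply abspow_mono; auto. split. apply (DD_nonneg ua ub n t2). apply HS1. unfold Rmin, Rmax; destruct Rle_dec; lra. }
      assert (w n * (abspow (Cmod (ua n t2)) q + abspow (Cmod (ub n t2)) q) <= w n * (2 * pS n)) by (apply Rmult_le_compat_l; lra).
      lra.
    - apply Hw.
    - unfold R0. apply (Zsum_term N (fun n => w n * 2 ^ Z.abs_nat n)); auto.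
      intros; apply Rmult_le_pos. apply Hw. apply pow_le; lra. }
  rewrite Zsum_scal. change (Zsum N (fun n => v n * pS n)) with (Phi N). pose proof (HPhiB N). lra.
Qed.

Lemma step_inf ua ub dua dub t0 T B L E K K0 (w : Z -> R) M0 t1 t2 :
  Setting ua ub dua dub t0 T B L E K K0 ->
  (forall n, 0 <= w n /\ w n <= M0 * w (n+1)%Z /\ w n <= M0 * w (n-1)%Z) ->
  t0 - T < t1 < t0 + T -> t0 - T < t2 < t0 + T ->
  Rabs (t2 - t1) <= hstep 1 L K M0 ->
  (exists B1, forall n, w n * (Cmod (ua n t1) + Cmod (ub n t1)) <= B1) ->
  (exists B2, forall n, w n * (Cmod (ua n t2) + Cmod (ub n t2)) <= B2).
Proof.
  intros HS Hw Ht1 Ht2 Hh [B1 HB1].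
  pose proof HS as [HB [HL [HE _]]].
  destruct (S_exists _ _ _ _ _ _ _ _ _ _ _ t1 t2 HS Ht1 Ht2) as [S [HS1 [HS2 HS3]]].
  set (d := Rabs (t2 - t1)) in *.
  assert (Hd0 : 0 <= d) by apply Rabs_pos.
  destruct (hstep_small 1 L K M0 d HL Hd0 Hh) as [Hs1 [_ Hs3]].
  set (Cv := Cvv M0) in *.
  assert (HCv : 1 <= Cv) by (unfold Cv, Cvv; pose proof (Rmax_r M0 2); lra).
  set (k1 := 2 * INR K + 1) in *.
  assert (Hk1 : 1 <= k1) by (unfold k1; pose proof (pos_INR K); lra).
  set (Z1 := k1 * Cv ^ K) in *.
  assert (HZ1 : 1 <= Z1) by (unfold Z1; assert (1 <= Cv ^ K) by (apply pow_R1_Rle; lra); nra).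
  assert (HSn : forall n, 0 <= S n).
  { intros n. eapply Rle_trans. apply (DD_nonneg ua ub n t1). apply HS1. unfold Rmin, Rmax; destruct Rle_dec; lra. }
  assert (HB1p : 0 <= B1).
  { eapply Rle_trans. 2: apply (HB1 0%Z). apply Rmult_le_pos. apply Hw. apply (DD_nonneg ua ub 0%Z t1). }
  set (W0 := Zsum K0 w).
  assert (HW0 : 0 <= W0) by (apply Zsum_nonneg; intros; apply Hw).
  set (A := B1 + 4 * d * (E * W0)).
  assert (HA : 0 <= A) by (unfold A; assert (0 <= E * W0) by nra; nra).
  set (c := Z1 * (4 * d * L)).
  assert (Hc : 0 <= c <= 1/2) by (split; [unfold c; apply Rmult_le_pos; nra | exact Hs3]).
  exists (2 * A). intros n0.
  set (R0 := w n0 * 2 ^ Z.abs_nat n0).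
  assert (HR0 : 0 <= R0) by (apply Rmult_le_pos; [apply Hw | apply pow_le; lra]).
  set (v := vw w R0).
  assert (Hv : forall n, 0 <= v n) by (intros; apply vw_nonneg; auto; apply Hw).
  assert (Hvs : forall n, v n <= Cv * v (n+1)%Z /\ v n <= Cv * v (n-1)%Z).
  { intros n. apply (vw_shift w M0 R0 HR0 Hw n). }
  assert (Hall : forall x, (exists n, x = v n * S n) -> x <= 2 * A).
  { apply (lub_fix _ A c HA Hc).
    - exists (v 0%Z * S 0%Z). eauto.
    - exists (R0 * (2 * B)). intros x [n ->]. apply Rmult_le_compat; auto.
      unfold v, vw. eapply Rle_trans. apply Rmin_r.
      pose proof (half_pow_dec (Z.abs_nat n) 0 ltac:(lia)). simpl in H.
      assert (0 <= (/2) ^ Z.abs_nat n) by (apply pow_le; lra). nra.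
    - intros Y HY x [n ->].
      assert (HZs : 0 <= Zsum K (fun j => S (n + j)%Z)) by (apply Zsum_nonneg; auto).
      pose proof (ee_nonneg E K0 n HE).
      assert (S n <= DD ua ub n t1 + (4 * d * L) * Zsum K (fun j => S (n + j)%Z) + (4 * d) * ee E K0 n).
      { pose proof (HS3 n). fold d in H0. lra. }
      assert (X1 : v n * DD ua ub n t1 <= B1).
      { eapply Rle_trans. 2: apply (HB1 n). apply Rmult_le_compat_r. apply DD_nonneg. apply vw_le. }
      assert (X2 : v n * Zsum K (fun j => S (n + j)%Z) <= Z1 * Y).
      { rewrite <- Zsum_scal. eapply Rle_trans. apply (Zsum_le _ _ (fun _ => Cv ^ K * Y)).
        intros j Hj. pose proof (shift_pt v Cv HCv Hv Hvs K j n Hj).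
        pose proof (HY (v (n + j)%Z * S (n + j)%Z) (ex_intro _ _ eq_refl)).
        assert (0 <= Cv ^ K) by (apply pow_le; lra).
        apply Rle_trans with (Cv ^ K * v (n + j)%Z * S (n + j)%Z).
        apply Rmult_le_compat_r; auto.
        rewrite Rmult_assoc. apply Rmult_le_compat_l; auto.
        rewrite Zsum_const. unfold Z1, k1. right; ring. }
      assert (X3 : v n * ee E K0 n <= E * W0).
      { unfold ee. destruct (Z.abs n <=? Z.of_nat K0)%Z eqn:Hn.
        - rewrite Rmult_comm. apply Rmult_le_compat_l; auto. eapply Rle_trans. apply vw_le.
          apply (Zsum_term K0 w n). intros; apply Hw. apply Z.leb_le; auto.
        - rewrite Rmult_0_r. nra. }
      apply (Rmult_le_compat_l (v n)) in H0; auto.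
      assert (0 <= 4 * d * L) by nra.
      assert (v n * (4 * d * L * Zsum K (fun j => S (n + j)%Z)) <= (4 * d * L) * (Z1 * Y)).
      { rewrite <- Rmult_assoc, (Rmult_comm (v n)), Rmult_assoc. apply Rmult_le_compat_l; auto. }
      assert (v n * (4 * d * ee E K0 n) <= 4 * d * (E * W0)).
      { rewrite <- Rmult_assoc, (Rmult_comm (v n)), Rmult_assoc. apply Rmult_le_compat_l; lra. }
      unfold A, c. 
      assert (v n * (DD ua ub n t1 + 4 * d * L * Zsum K (fun j => S (n + j)%Z) + 4 * d * ee E K0 n) =
              v n * DD ua ub n t1 + v n * (4 * d * L * Zsum K (fun j => S (n + j)%Z)) + v n * (4 * d * ee E K0 n)) by ring.
      assert (4 * d * L * (Z1 * Y) = Z1 * (4 * d * L) * Y) by ring.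
      lra. }
  assert (Heq : v n0 = w n0) by (apply vw_eq; [apply Hw | unfold R0; lra]).
  pose proof (Hall (v n0 * S n0) (ex_intro _ _ eq_refl)).
  rewrite Heq in H.
  assert (DD ua ub n0 t2 <= S n0) by (apply HS1; unfold Rmin, Rmax; destruct Rle_dec; lra).
  assert (w n0 * DD ua ub n0 t2 <= w n0 * S n0) by (apply Rmult_le_compat_l; auto; apply Hw).
  unfold DD in *. lra.
Qed.

Lemma chain (P : R -> Prop) t0 T h : 0 < h -> P t0 ->
  (forall t1 t2, t0 - T < t1 < t0 + T -> t0 - T < t2 < t0 + T -> Rabs (t2 - t1) <= h -> P t1 -> P t2) ->
  forall t, t0 - T < t < t0 + T -> P t.
Proof.
  intros Hh H0 Hs t Ht.
  destruct (INR_archimed h (Rabs (t - t0)) ltac:(lra)) as [m Hm].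
  assert (Hm0 : (0 < m)%nat).
  { destruct m. simpl in Hm. pose proof (Rabs_pos (t - t0)). lra. lia. }
  assert (HmR : 0 < INR m) by (apply lt_0_INR; auto).
  set (tk := fun k => t0 + INR k * (t - t0) / INR m).
  assert (HJ : forall k, (k <= m)%nat -> t0 - T < tk k < t0 + T).
  { intros k Hk. unfold tk. assert (0 <= INR k <= INR m) by (split; [apply pos_INR | apply le_INR; auto]).
    set (lam := INR k / INR m).
    assert (0 <= lam <= 1).
    { unfold lam. split. apply Rmult_le_pos. lra. left; apply Rinv_0_lt_compat; auto.
      apply (Rmult_le_reg_r (INR m)); auto. unfold Rdiv. rewrite Rmult_assoc, Rinv_l by lra. lra. }
    replace (t0 + INR k * (t - t0) / INR m) with (t0 + lam * (t - t0)) by (unfold lam; field; lra).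
    destruct (Rle_dec t0 t); nra. }
  assert (Hk : forall k, (k <= m)%nat -> P (tk k)).
  { induction k; intros Hk.
    - unfold tk. replace (t0 + INR 0 * (t - t0) / INR m) with t0 by (simpl; field; lra). auto.
    - apply (Hs (tk k)). apply HJ; lia. apply HJ; lia.
      + unfold tk. rewrite S_INR.
        replace (t0 + (INR k + 1) * (t - t0) / INR m - (t0 + INR k * (t - t0) / INR m)) with ((t - t0) / INR m) by (field; lra).
        unfold Rdiv. rewrite Rabs_mult, Rabs_inv, (Rabs_right (INR m)) by lra.
        apply (Rmult_le_reg_r (INR m)); auto. rewrite Rmult_assoc, Rinv_l by lra. lra.
      + apply IHk; lia. }
  replace t with (tk m). apply Hk; lia. unfold tk. field. lra.
Qed.

Lemma ee_mono E E' K K' n : 0 <= E <= E' -> (K <= K')%nat -> ee E K n <= ee E' K' n.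
Proof.
  intros HE HK. unfold ee. destruct (Z.abs n <=? Z.of_nat K)%Z eqn:H1.
  - apply Z.leb_le in H1. replace (Z.abs n <=? Z.of_nat K')%Z with true. lra. symmetry; apply Z.leb_le; lia.
  - destruct (Z.abs n <=? Z.of_nat K')%Z; lra.
Qed.

Lemma Cmod_tri3 (x y z : C) : Cmod (Cminus x z) <= Cmod (Cminus x y) + Cmod (Cminus z y).
Proof.
  replace (Cminus x z) with (Cplus (Cminus x y) (Cmult (RtoC (-1)) (Cminus z y))) by Ceq.
  eapply Rle_trans. apply Cmod_triangle. rewrite Cmod_mult, Cmod_R.
  replace (Rabs (-1)) with 1 by (rewrite Rabs_left; lra). lra.
Qed.

Lemma deriv_bound (F : cseq -> cseq -> cseq) K M L a b ar br al bl :
  (forall a b a' b', bnd M a -> bnd M b -> bnd M a' -> bnd M b' ->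
    forall n, Cmod (F a b n) <= L /\ Cmod (Cminus (F a b n) (F a' b' n)) <= L * Wn K a b a' b' n) ->
  bnd M a -> bnd M b -> bnd M ar -> bnd M br -> bnd M al -> bnd M bl ->
  forall n, Cmod (Cminus (F a b n) (if (0 <=? n)%Z then F ar br n else F al bl n)) <=
    L * Wn K a b (fun m => if (0 <=? m)%Z then ar m else al m) (fun m => if (0 <=? m)%Z then br m else bl m) n
    + ee (2 * L) K n.
Proof.
  intros HF Ha Hb Har Hbr Hal Hbl n.
  set (a' := fun m => if (0 <=? m)%Z then ar m else al m).
  set (b' := fun m => if (0 <=? m)%Z then br m else bl m).
  assert (Ha' : bnd M a') by (intros m; unfold a'; destruct (0 <=? m)%Z; auto).
  assert (Hb' : bnd M b') by (intros m; unfold b'; destruct (0 <=? m)%Z; auto).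
  destruct (HF a b a' b' Ha Hb Ha' Hb' n) as [Ha1 Ha2].
  assert (HL : 0 <= L) by (pose proof (Cmod_ge_0 (F a b n)); lra).
  assert (HW : 0 <= L * Wn K a b a' b' n) by (apply Rmult_le_pos; auto; apply Wn_nonneg).
  destruct (Z_le_gt_dec (Z.abs n) (Z.of_nat K)) as [Hn|Hn].
  - unfold ee. replace (Z.abs n <=? Z.of_nat K)%Z with true by (symmetry; apply Z.leb_le; auto).
    assert (forall y, Cmod y <= L -> Cmod (Cminus (F a b n) y) <= 2 * L).
    { intros y Hy. unfold Cminus. eapply Rle_trans. apply Cmod_triangle. rewrite Cmod_opp. lra. }
    destruct (0 <=? n)%Z.
    + pose proof (H (F ar br n) (proj1 (HF ar br ar br Har Hbr Har Hbr n))). lra.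
    + pose proof (H (F al bl n) (proj1 (HF al bl al bl Hal Hbl Hal Hbl n))). lra.
  - unfold ee. replace (Z.abs n <=? Z.of_nat K)%Z with false by (symmetry; apply Z.leb_gt; lia).
    rewrite Rplus_0_r.
    destruct (Z_le_gt_dec 0 n) as [Hp|Hp].
    + replace (0 <=? n)%Z with true by (symmetry; apply Z.leb_le; auto).
      destruct (HF ar br a' b' Har Hbr Ha' Hb' n) as [_ H2].
      assert (Wn K ar br a' b' n = 0).
      { unfold Wn. rewrite (Zsum_ext _ _ (fun _ => 0)). apply Zsum_const0.
        intros j Hj. unfold dd, a', b'. replace (0 <=? n + j)%Z with true by (symmetry; apply Z.leb_le; lia).
        replace (Cminus (ar (n + j)%Z) (ar (n + j)%Z)) with (RtoC 0) by Ceq.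
        replace (Cminus (br (n + j)%Z) (br (n + j)%Z)) with (RtoC 0) by Ceq.
        rewrite Cmod_0. ring. }
      rewrite H, Rmult_0_r in H2.
      pose proof (Cmod_tri3 (F a b n) (F a' b' n) (F ar br n)). lra.
    + replace (0 <=? n)%Z with false by (symmetry; apply Z.leb_gt; lia).
      destruct (HF al bl a' b' Hal Hbl Ha' Hb' n) as [_ H2].
      assert (Wn K al bl a' b' n = 0).
      { unfold Wn. rewrite (Zsum_ext _ _ (fun _ => 0)). apply Zsum_const0.
        intros j Hj. unfold dd, a', b'. replace (0 <=? n + j)%Z with false by (symmetry; apply Z.leb_gt; lia).
        replace (Cminus (al (n + j)%Z) (al (n + j)%Z)) with (RtoC 0) by Ceq.
        replace (Cminus (bl (n + j)%Z) (bl (n + j)%Z)) with (RtoC 0) by Ceq.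
        rewrite Cmod_0. ring. }
      rewrite H, Rmult_0_r in H2.
      pose proof (Cmod_tri3 (F a b n) (F a' b' n) (F al bl n)). lra.
Qed.

Lemma wfin_Zsum w q a b : wnorm_finite w (PFin q) a b <->
  exists B, forall N, Zsum N (fun n => w n * (abspow (Cmod (a n)) q + abspow (Cmod (b n)) q)) <= B.
Proof.
  unfold wnorm_finite. split; intros [B HB]; exists B; intros N.
  - rewrite <- Zsum_sumf. exact (HB N).
  - eapply Rle_trans; [|exact (HB N)]. apply Req_le.
    exact (Zsum_sumf N (fun n => w n * (abspow (Cmod (a n)) q + abspow (Cmod (b n)) q))).
Qed.

Lemma Cmod_minus_le (x y : C) : Cmod (Cminus x y) <= Cmod x + Cmod y.
Proof.
  unfold Cminus. eapply Rle_trans. apply Cmod_triangle. rewrite Cmod_opp. lra.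
Qed.

Theorem lemma3p2 (w : Z -> R) (p : exponent) (rm rp : nat) (cp cm : nat -> C)
    (t0 T : R) (alpha beta alphal betal alphar betar : Z -> R -> C) :
  (forall n, 1 <= w n) ->
  (exists M : R, forall n,
      Rabs (w (n + 1)%Z / w n) + Rabs (w n / w (n + 1)%Z) <= M) ->
  valid_exponent p ->
  0 < T ->
  AL_solution rm rp cp cm t0 T alpha beta ->
  AL_solution rm rp cp cm t0 T alphal betal ->
  AL_solution rm rp cp cm t0 T alphar betar ->
  let alt t : Z -> C := fun n => if (0 <=? n)%Z then alphar n t else alphal n t in
  let bet t : Z -> C := fun n => if (0 <=? n)%Z then betar n t else betal n t in
  wnorm_finite w p (fun n => Cminus (alpha n t0) (alt t0 n))
                   (fun n => Cminus (beta n t0) (bet t0 n)) ->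
  forall t, t0 - T < t < t0 + T ->
  wnorm_finite w p (fun n => Cminus (alpha n t) (alt t n))
                   (fun n => Cminus (beta n t) (bet t n)).
Proof.
  intros Hw1 [M Hrat] Hp HT Hsol Hsoll Hsolr alt bet Hinit t Ht.
  destruct Hsol as [[Ma HMa] [da [db [Hd Heq]]]].
  destruct Hsoll as [[Ml HMl] [dal [dbl [Hdl Heql]]]].
  destruct Hsolr as [[Mr HMr] [dar [dbr [Hdr Heqr]]]].
  set (Mb := Rabs Ma + Rabs Ml + Rabs Mr).
  assert (HMb : 0 <= Mb) by (unfold Mb; pose proof (Rabs_pos Ma); pose proof (Rabs_pos Ml); pose proof (Rabs_pos Mr); lra).
  assert (HMa' : Ma <= Mb) by (unfold Mb; pose proof (Rabs_pos Ml); pose proof (Rabs_pos Mr); pose proof (Rle_abs Ma); lra).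
  assert (HMl' : Ml <= Mb) by (unfold Mb; pose proof (Rabs_pos Ma); pose proof (Rabs_pos Mr); pose proof (Rle_abs Ml); lra).
  assert (HMr' : Mr <= Mb) by (unfold Mb; pose proof (Rabs_pos Ml); pose proof (Rabs_pos Ma); pose proof (Rle_abs Mr); lra).
  destruct (Loc_XA rm rp cp cm) as [KA HA]. destruct (HA Mb) as [LA HLA].
  destruct (Loc_XB rm rp cp cm) as [KB HB]. destruct (HB Mb) as [LB HLB].
  pose proof (Loc_L_nonneg _ _ _ _ HLA HMb) as HLA0.
  pose proof (Loc_L_nonneg _ _ _ _ HLB HMb) as HLB0.
  set (K := max KA KB). set (L := Rmax LA LB).
  assert (HL : 0 <= L) by (unfold L; pose proof (Rmax_l LA LB); lra).
  set (ua := fun n s => Cminus (alpha n s) (alt s n)).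
  set (ub := fun n s => Cminus (beta n s) (bet s n)).
  set (dua := fun n s => Cminus (da n s) (if (0 <=? n)%Z then dar n s else dal n s)).
  set (dub := fun n s => Cminus (db n s) (if (0 <=? n)%Z then dbr n s else dbl n s)).
  assert (HSet : Setting ua ub dua dub t0 T (2 * Mb) L (2 * L) K K).
  { split; [lra|split; [lra|split; [lra|]]].
    intros n s Hs.
    assert (Bs : forall (f : Z -> R -> C) Mf, (forall n t, t0 - T < t < t0 + T -> Cmod (f n t) <= Mf) -> Mf <= Mb ->
                 bnd Mb (fun m => f m s)).
    { intros f Mf Hf HMf m. pose proof (Hf m s Hs). lra. }
    assert (Ba := Bs alpha Ma (fun n t H => proj1 (HMa n t H)) HMa').
    assert (Bb := Bs beta Ma (fun n t H => proj2 (HMa n t H)) HMa').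
    assert (Bal := Bs alphal Ml (fun n t H => proj1 (HMl n t H)) HMl').
    assert (Bbl := Bs betal Ml (fun n t H => proj2 (HMl n t H)) HMl').
    assert (Bar := Bs alphar Mr (fun n t H => proj1 (HMr n t H)) HMr').
    assert (Bbr := Bs betar Mr (fun n t H => proj2 (HMr n t H)) HMr').
    split; [|split; [|split; [|split; [|split]]]].
    - unfold ua. eapply Rle_trans. apply Cmod_minus_le. pose proof (Ba n).
      assert (Cmod (alt s n) <= Mb) by (unfold alt; destruct (0 <=? n)%Z; auto). simpl in *. lra.
    - unfold ub. eapply Rle_trans. apply Cmod_minus_le. pose proof (Bb n).
      assert (Cmod (bet s n) <= Mb) by (unfold bet; destruct (0 <=? n)%Z; auto). simpl in *. lra.
    - unfold ua, dua, alt. destruct (0 <=? n)%Z.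
      + apply (is_derive_minus (fun s => alpha n s) (fun s => alphar n s)). apply Hd; auto. apply Hdr; auto.
      + apply (is_derive_minus (fun s => alpha n s) (fun s => alphal n s)). apply Hd; auto. apply Hdl; auto.
    - unfold ub, dub, bet. destruct (0 <=? n)%Z.
      + apply (is_derive_minus (fun s => beta n s) (fun s => betar n s)). apply Hd; auto. apply Hdr; auto.
      + apply (is_derive_minus (fun s => beta n s) (fun s => betal n s)). apply Hd; auto. apply Hdl; auto.
    - unfold dua.
      rewrite (AL_da _ _ _ _ _ _ _ n (proj1 (Heq s Hs n))).
      rewrite (AL_da _ _ _ _ _ _ _ n (proj1 (Heqr s Hs n))).
      rewrite (AL_da _ _ _ _ _ _ _ n (proj1 (Heql s Hs n))).
      pose proof (deriv_bound _ KA Mb LA _ _ _ _ _ _ HLA Ba Bb Bar Bbr Bal Bbl n) as DB.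
      eapply Rle_trans. apply Req_le. 2: eapply Rle_trans. 2: exact DB.
      { destruct (0 <=? n)%Z; apply Cmod_mi. }
      apply Rplus_le_compat.
      + apply Rmult_le_compat. auto. apply Wn_nonneg. apply Rmax_l.
        apply (Wn_mono KA K). unfold K; lia.
      + apply ee_mono. split; [lra|]. pose proof (Rmax_l LA LB). fold L in H. lra. unfold K; lia.
    - unfold dub.
      rewrite (AL_db _ _ _ _ _ _ _ n (proj2 (Heq s Hs n))).
      rewrite (AL_db _ _ _ _ _ _ _ n (proj2 (Heqr s Hs n))).
      rewrite (AL_db _ _ _ _ _ _ _ n (proj2 (Heql s Hs n))).
      pose proof (deriv_bound _ KB Mb LB _ _ _ _ _ _ HLB Ba Bb Bar Bbr Bal Bbl n) as DB.
      eapply Rle_trans. apply Req_le. 2: eapply Rle_trans. 2: exact DB.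
      { destruct (0 <=? n)%Z; apply Cmod_mi. }
      apply Rplus_le_compat.
      + apply Rmult_le_compat. auto. apply Wn_nonneg. apply Rmax_r.
        apply (Wn_mono KB K). unfold K; lia.
      + apply ee_mono. split; [lra|]. pose proof (Rmax_r LA LB). fold L in H. lra. unfold K; lia. }
  assert (Hw : forall n, 0 <= w n /\ w n <= M * w (n+1)%Z /\ w n <= M * w (n-1)%Z).
  { intros n. pose proof (Hw1 n). pose proof (Hw1 (n+1)%Z). pose proof (Hw1 (n-1)%Z).
    split. lra. split.
    - pose proof (Hrat n). pose proof (Rabs_pos (w (n + 1)%Z / w n)).
      pose proof (Rle_abs (w n / w (n + 1)%Z)).
      assert (w n / w (n+1)%Z <= M) by lra.
      apply (Rmult_le_compat_r (w (n+1)%Z)) in H5; [|lra].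
      unfold Rdiv in H5. rewrite Rmult_assoc, Rinv_l in H5; lra.
    - pose proof (Hrat (n-1)%Z). replace (n - 1 + 1)%Z with n in H2 by lia.
      pose proof (Rabs_pos (w (n - 1)%Z / w n)).
      pose proof (Rle_abs (w n / w (n - 1)%Z)).
      assert (w n / w (n-1)%Z <= M) by lra.
      apply (Rmult_le_compat_r (w (n-1)%Z)) in H5; [|lra].
      unfold Rdiv in H5. rewrite Rmult_assoc, Rinv_l in H5; lra. }
  destruct p as [q|].
  - simpl in Hp. apply wfin_Zsum. apply wfin_Zsum in Hinit.
    apply (chain (fun t => exists B, forall N, Zsum N (fun n => w n * (abspow (Cmod (ua n t)) q + abspow (Cmod (ub n t)) q)) <= B)
                 t0 T (hstep q L K M)); auto.
    apply hstep_pos; auto.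
    intros t1 t2 Ht1 Ht2 Hh. apply (step_fin ua ub dua dub t0 T (2 * Mb) L (2 * L) K K w M q t1 t2); auto.
  - apply (chain (fun t => exists B, forall n, w n * (Cmod (ua n t) + Cmod (ub n t)) <= B)
                 t0 T (hstep 1 L K M)); auto.
    apply hstep_pos; auto.
    intros t1 t2 Ht1 Ht2 Hh. apply (step_inf ua ub dua dub t0 T (2 * Mb) L (2 * L) K K w M t1 t2); auto.
Qed.
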